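(* (i) If $X$ is a real Banach space with a shrinking 1-unconditional finite-dimensional decomposition, then $X$ has property (au$^*$). (ii) If $Y$ is a separable real Banach space with property (au$^*$), then every closed subspace $X$ of $Y$ and every quotient $Y/Z$ of $Y$ by a closed subspace $Z$ has property (au$^*$).
   Context: All Banach spaces are real. A separable Banach space $X$ has property (au$^*$) if $\lim_{n\to\infty}(\|x^*+x_n^*\|-\|x^*-x_n^*\|)=0$ whenever $x^*\in X^*$ and $(x_n^* )_{n\ge1}$ is a weak$^*$-null sequence in $X^*$. A finite-dimensional decomposition (FDD) of $Y$ is a sequence of finite-rank projections $(Q_j)_{j\ge1}$ with $Q_iQ_j=0$ for $i\ne j$ and $y=\sum_j Q_jy$ for all $y\in Y$; it is a 1-unconditional FDD (1-UFDD) if $\|\sum_{j=1}^n\epsilon_jQ_jy\|\le\|y\|$ for all $y$, all $n$ and all signs $\epsilon_j=\pm1$ (so the series converge unconditionally); it is shrinking if $x^*=\sum_j Q_j^*x^*$ in norm for every $x^*\in Y^*$. *)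

(* Defs.v *)
From Stdlib Require Import Reals Lra Classical ClassicalEpsilon ProofIrrelevance.
Open Scope R_scope.

Record NormedSpace := mkNS {
  V :> Type;
  vzero : V;
  vadd : V -> V -> V;
  vopp : V -> V;
  vscal : R -> V -> V;
  vnorm : V -> R;
  vadd_assoc : forall x y z, vadd x (vadd y z) = vadd (vadd x y) z;
  vadd_comm : forall x y, vadd x y = vadd y x;
  vadd_0l : forall x, vadd vzero x = x;
  vadd_oppr : forall x, vadd x (vopp x) = vzero;
  vscal_addl : forall a b x, vscal (a + b) x = vadd (vscal a x) (vscal b x);
  vscal_addr : forall a x y, vscal a (vadd x y) = vadd (vscal a x) (vscal a y);
  vscal_assoc : forall a b x, vscal a (vscal b x) = vscal (a * b) x;
  vscal_1 : forall x, vscal 1 x = x;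
  vnorm_triangle : forall x y, vnorm (vadd x y) <= vnorm x + vnorm y;
  vnorm_scal : forall a x, vnorm (vscal a x) = Rabs a * vnorm x;
  vnorm_eq0 : forall x, vnorm x = 0 -> x = vzero
}.

Arguments vzero {_}.
Arguments vadd {_} _ _.
Arguments vopp {_} _.
Arguments vscal {_} _ _.
Arguments vnorm {_} _.

Definition vsub {X : NormedSpace} (x y : X) : X := vadd x (vopp y).

Fixpoint vsum {X : NormedSpace} (f : nat -> X) (n : nat) : X :=
  match n with O => vzero | S m => vadd (vsum f m) (f m) end.

Fixpoint rsum (f : nat -> R) (n : nat) : R :=
  match n with O => 0 | S m => rsum f m + f m end.

Definition conv {X : NormedSpace} (u : nat -> X) (l : X) : Prop :=
  forall eps, eps > 0 -> exists N, forall n, (N <= n)%nat -> vnorm (vsub (u n) l) < eps.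

Definition cauchy {X : NormedSpace} (u : nat -> X) : Prop :=
  forall eps, eps > 0 -> exists N, forall m n, (N <= m)%nat -> (N <= n)%nat ->
    vnorm (vsub (u m) (u n)) < eps.

Definition Banach (X : NormedSpace) : Prop :=
  forall u : nat -> X, cauchy u -> exists l, conv u l.

Definition separable (X : NormedSpace) : Prop :=
  exists d : nat -> X, forall x eps, eps > 0 -> exists n, vnorm (vsub x (d n)) < eps.

Definition linear_functional {X : NormedSpace} (f : X -> R) : Prop :=
  (forall x y, f (vadd x y) = f x + f y) /\ (forall a x, f (vscal a x) = a * f x).

(** elements of X^*: bounded (= continuous) linear functionals *)
Definition dual_elem {X : NormedSpace} (f : X -> R) : Prop :=
  linear_functional f /\ exists C, forall x, Rabs (f x) <= C * vnorm x.

Definition dnorm {X : NormedSpace} (f : X -> R) : R :=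
  epsilon (inhabits 0) (is_lub (fun t => exists x : X, vnorm x <= 1 /\ t = Rabs (f x))).

(** property (au^* ) (defined for separable spaces) *)
Definition has_au_star (X : NormedSpace) : Prop :=
  separable X /\
  forall (xs : X -> R) (xn : nat -> X -> R),
    dual_elem xs -> (forall n, dual_elem (xn n)) ->
    (forall x, Un_cv (fun n => xn n x) 0) ->
    Un_cv (fun n => dnorm (fun x => xs x + xn n x) - dnorm (fun x => xs x - xn n x)) 0.

Definition linear_op {X : NormedSpace} (T : X -> X) : Prop :=
  (forall x y, T (vadd x y) = vadd (T x) (T y)) /\ (forall a x, T (vscal a x) = vscal a (T x)).

Definition bounded_op {X : NormedSpace} (T : X -> X) : Prop :=
  exists C, forall x, vnorm (T x) <= C * vnorm x.

Definition finite_rank {X : NormedSpace} (T : X -> X) : Prop :=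
  exists (m : nat) (v : nat -> X), forall x, exists c : nat -> R,
    T x = vsum (fun i => vscal (c i) (v i)) m.

(** FDD (Q_j)_{j>=0} (indexed from 0 instead of 1) *)
Definition is_FDD (X : NormedSpace) (Q : nat -> X -> X) : Prop :=
  (forall j, linear_op (Q j) /\ bounded_op (Q j) /\ finite_rank (Q j)) /\
  (forall j x, Q j (Q j x) = Q j x) /\
  (forall i j x, i <> j -> Q i (Q j x) = vzero) /\
  (forall y, conv (fun n => vsum (fun j => Q j y) n) y).

Definition is_1UFDD (X : NormedSpace) (Q : nat -> X -> X) : Prop :=
  is_FDD X Q /\
  forall (y : X) (n : nat) (eps : nat -> bool),
    vnorm (vsum (fun j => vscal (if eps j then 1 else -1) (Q j y)) n) <= vnorm y.

Definition shrinking_FDD (X : NormedSpace) (Q : nat -> X -> X) : Prop :=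
  forall f : X -> R, dual_elem f ->
    Un_cv (fun n => dnorm (fun x => f x - rsum (fun j => f (Q j x)) n)) 0.

Definition closed_subspace (Y : NormedSpace) (P : Y -> Prop) : Prop :=
  P vzero /\ (forall x y, P x -> P y -> P (vadd x y)) /\
  (forall a x, P x -> P (vscal a x)) /\
  (forall u l, (forall n, P (u n)) -> conv u l -> P l).

Lemma vscal_0 (X : NormedSpace) (x : X) : vscal 0 x = vzero.
Proof.
  assert (H : vadd (vscal 0 x) (vscal 0 x) = vscal 0 x).
  { rewrite <- vscal_addl. now rewrite Rplus_0_l. }
  assert (H2 : vadd (vadd (vscal 0 x) (vscal 0 x)) (vopp (vscal 0 x)) =
               vadd (vscal 0 x) (vopp (vscal 0 x))) by now rewrite H.
  rewrite <- vadd_assoc, !vadd_oppr, vadd_comm, vadd_0l in H2. exact H2.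
Qed.

Lemma vopp_scal (X : NormedSpace) (x : X) : vopp x = vscal (-1) x.
Proof.
  assert (H : vadd x (vscal (-1) x) = vzero).
  { rewrite <- (vscal_1 X x) at 1. rewrite <- vscal_addl.
    replace (1 + -1) with 0 by ring. apply vscal_0. }
  rewrite <- (vadd_0l X (vopp x)), <- H, (vadd_comm X x), <- vadd_assoc,
    vadd_oppr, vadd_comm, vadd_0l. reflexivity.
Qed.

Section Sub.
Variables (Y : NormedSpace) (P : Y -> Prop) (HP : closed_subspace Y P).

Let S := {y : Y | P y}.
Lemma sub_eq (a b : S) : proj1_sig a = proj1_sig b -> a = b.
Proof. destruct a, b; simpl; intros ->; f_equal; apply proof_irrelevance. Qed.

Definition sub_zero : S := exist _ vzero (proj1 HP).
Definition sub_add (a b : S) : S :=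
  exist _ (vadd (proj1_sig a) (proj1_sig b))
    (proj1 (proj2 HP) _ _ (proj2_sig a) (proj2_sig b)).
Definition sub_scal (r : R) (a : S) : S :=
  exist _ (vscal r (proj1_sig a)) (proj1 (proj2 (proj2 HP)) r _ (proj2_sig a)).
Definition sub_opp (a : S) : S := sub_scal (-1) a.
Definition sub_norm (a : S) : R := vnorm (proj1_sig a).

Definition subspace : NormedSpace.
Proof.
  refine (mkNS S sub_zero sub_add sub_opp sub_scal sub_norm _ _ _ _ _ _ _ _ _ _ _);
  unfold sub_norm, sub_opp; intros; try (apply sub_eq; simpl).
  - apply vadd_assoc.
  - apply vadd_comm.
  - apply vadd_0l.
  - rewrite <- vopp_scal. apply vadd_oppr.
  - apply vscal_addl.
  - apply vscal_addr.
  - apply vscal_assoc.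
  - apply vscal_1.
  - apply vnorm_triangle.
  - apply vnorm_scal.
  - apply vnorm_eq0 in H. exact H.
Defined.
End Sub.

(** * Quotients: Q together with q : Y -> Q is (isometrically) the quotient Y/Z *)
Definition is_quotient_map (Y : NormedSpace) (Z : Y -> Prop) (Q : NormedSpace)
  (q : Y -> Q) : Prop :=
  (forall x y, q (vadd x y) = vadd (q x) (q y)) /\
  (forall a x, q (vscal a x) = vscal a (q x)) /\
  (forall w : Q, exists y, q y = w) /\
  (forall y, q y = vzero <-> Z y) /\
  (* ||q y|| = inf { ||y + z|| : z in Z } *)
  (forall y z, Z z -> vnorm (q y) <= vnorm (vadd y z)) /\
  (forall y eps, eps > 0 -> exists z, Z z /\ vnorm (vadd y z) < vnorm (q y) + eps).

(* Main.v *)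
Require Import Defs.
From Stdlib Require Import Reals ZArith Lra Lia Classical ClassicalEpsilon ProofIrrelevance FunctionalExtensionality List Cantor Rtopology.
Open Scope R_scope.

Inductive vexp := VAtom (n:nat) | VZero | VAdd (a b : vexp) | VSub (a b : vexp)
  | VOpp (a : vexp) | VScal (r:R) (a:vexp).

Fixpoint vden (X : NormedSpace) (env : list X) (e : vexp) : X :=
  match e with
  | VAtom n => nth n env vzero
  | VZero => vzero
  | VAdd a b => vadd (vden X env a) (vden X env b)
  | VSub a b => vsub (vden X env a) (vden X env b)
  | VOpp a => vopp (vden X env a)
  | VScal r a => vscal r (vden X env a)
  end.

Fixpoint vcoef (e : vexp) (i : nat) : R :=
  match e with
  | VAtom n => if Nat.eqb n i then 1 else 0
  | VZero => 0
  | VAdd a b => vcoef a i + vcoef b i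
  | VSub a b => vcoef a i - vcoef b i
  | VOpp a => - vcoef a i
  | VScal r a => r * vcoef a i
  end.

Lemma vadd_0r (X : NormedSpace) (x : X) : vadd x vzero = x.
Proof. rewrite vadd_comm. apply vadd_0l. Qed.

Lemma vscal_zero (X : NormedSpace) (r : R) : vscal r (@vzero X) = vzero.
Proof. rewrite <- (vscal_0 X vzero), vscal_assoc. f_equal; ring. Qed.

Lemma vsum_add (X : NormedSpace) (f g : nat -> X) n :
  vsum (fun i => vadd (f i) (g i)) n = vadd (vsum f n) (vsum g n).
Proof.
  induction n; simpl. { now rewrite vadd_0l. }
  rewrite IHn. rewrite !vadd_assoc. f_equal.
  rewrite <- !vadd_assoc. f_equal. apply vadd_comm.
Qed.

Lemma vsum_scal (X : NormedSpace) (r : R) (f : nat -> X) n :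
  vsum (fun i => vscal r (f i)) n = vscal r (vsum f n).
Proof.
  induction n; simpl. { now rewrite vscal_zero. }
  rewrite IHn, vscal_addr. reflexivity.
Qed.

Lemma vsum_ext (X : NormedSpace) (f g : nat -> X) n :
  (forall i, (i < n)%nat -> f i = g i) -> vsum f n = vsum g n.
Proof.
  induction n; simpl; intros H; auto.
  rewrite IHn by (intros; apply H; lia). rewrite H by lia. auto.
Qed.

Lemma vsum_zero (X : NormedSpace) n : vsum (fun _ => @vzero X) n = vzero.
Proof. induction n; simpl; auto. rewrite IHn. apply vadd_0l. Qed.

Lemma vsum_delta (X : NormedSpace) (env : list X) k n :
  vsum (fun i => vscal (if Nat.eqb k i then 1 else 0) (nth i env vzero)) n =
  if Nat.ltb k n then nth k env vzero else vzero.
Proof.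
  induction n; simpl. auto.
  rewrite IHn.
  destruct (Nat.eqb k n) eqn:E.
  - apply Nat.eqb_eq in E; subst. rewrite vscal_1.
    replace (Nat.ltb n n) with false by (symmetry; apply Nat.ltb_ge; lia).
    replace (Nat.ltb n (S n)) with true by (symmetry; apply Nat.ltb_lt; lia).
    apply vadd_0l.
  - apply Nat.eqb_neq in E. rewrite vscal_0, vadd_0r.
    destruct (Nat.ltb k n) eqn:E1.
    + apply Nat.ltb_lt in E1. replace (Nat.ltb k (S n)) with true by (symmetry; apply Nat.ltb_lt; lia). auto.
    + apply Nat.ltb_ge in E1. replace (Nat.ltb k (S n)) with false by (symmetry; apply Nat.ltb_ge; lia). auto.
Qed.

Lemma vopp_eq (X : NormedSpace) (x : X) : vopp x = vscal (-1) x.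
Proof. apply vopp_scal. Qed.

Lemma vden_coef X env e :
  vden X env e = vsum (fun i => vscal (vcoef e i) (nth i env vzero)) (length env).
Proof.
  induction e; simpl.
  - rewrite vsum_delta. destruct (Nat.ltb n (length env)) eqn:E; auto.
    apply Nat.ltb_ge in E. apply nth_overflow. auto.
  - symmetry. transitivity (vsum (fun _ => @vzero X) (length env)).
    + apply vsum_ext. intros. apply vscal_0.
    + apply vsum_zero.
  - rewrite IHe1, IHe2, <- vsum_add. apply vsum_ext. intros. now rewrite vscal_addl.
  - unfold vsub. rewrite IHe1, IHe2, vopp_eq, <- vsum_scal, <- vsum_add. apply vsum_ext. intros.
    rewrite vscal_assoc, <- vscal_addl. f_equal. ring.
  - rewrite IHe, vopp_eq, <- vsum_scal. apply vsum_ext. intros.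
    rewrite vscal_assoc. f_equal. ring.
  - rewrite IHe, <- vsum_scal. apply vsum_ext. intros. now rewrite vscal_assoc.
Qed.

Lemma vring_ok X env e1 e2 :
  (forall i, (i < length env)%nat -> vcoef e1 i = vcoef e2 i) -> vden X env e1 = vden X env e2.
Proof.
  intros H. rewrite !vden_coef. apply vsum_ext. intros i Hi. now rewrite H.
Qed.

Ltac vfind x l := lazymatch l with
  | cons x _ => constr:(O)
  | cons _ ?l' => let n := vfind x l' in constr:(S n)
  end.

Ltac vadd_atom x l := match l with
  | _ => let _ := vfind x l in l
  | _ => constr:(cons x l)
  end.

Ltac vcollect t l := lazymatch t with
  | @vadd _ ?a ?b => let l1 := vcollect a l in vcollect b l1
  | @vsub _ ?a ?b => let l1 := vcollect a l in vcollect b l1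
  | @vopp _ ?a => vcollect a l
  | @vscal _ _ ?a => vcollect a l
  | @vzero _ => l
  | _ => vadd_atom t l
  end.

Ltac vreify t l := lazymatch t with
  | @vadd _ ?a ?b => let x := vreify a l in let y := vreify b l in constr:(VAdd x y)
  | @vsub _ ?a ?b => let x := vreify a l in let y := vreify b l in constr:(VSub x y)
  | @vopp _ ?a => let x := vreify a l in constr:(VOpp x)
  | @vscal _ ?r ?a => let x := vreify a l in constr:(VScal r x)
  | @vzero _ => constr:(VZero)
  | _ => let n := vfind t l in constr:(VAtom n)
  end.

Ltac vring := lazymatch goal with
  | |- @eq _ ?L ?R =>
    let X := lazymatch type of L with V ?X => X end in
    let l0 := vcollect L (@nil (V X)) in
    let l := vcollect R l0 in
    let e1 := vreify L l in let e2 := vreify R l in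
    change (vden X l e1 = vden X l e2); apply vring_ok;
    let i := fresh "i" in let Hi := fresh "Hi" in
    intros i Hi; simpl in Hi;
    repeat (first [exfalso; lia | destruct i as [|i]; [simpl; solve [ring | field; auto]|]])
  end.



Lemma vnorm_zero (X : NormedSpace) : vnorm (@vzero X) = 0.
Proof. rewrite <- (vscal_0 X vzero), vnorm_scal, Rabs_R0. ring. Qed.

Lemma vnorm_opp (X : NormedSpace) (x : X) : vnorm (vopp x) = vnorm x.
Proof. rewrite vopp_eq, vnorm_scal. replace (Rabs (-1)) with 1. ring. rewrite Rabs_left by lra. ring. Qed.

Lemma vnorm_nonneg (X : NormedSpace) (x : X) : 0 <= vnorm x.
Proof.
  pose proof (vnorm_triangle X x (vopp x)). rewrite vadd_oppr, vnorm_zero, vnorm_opp in H. lra.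
Qed.

Lemma vnorm_sub_sym (X : NormedSpace) (x y : X) : vnorm (vsub x y) = vnorm (vsub y x).
Proof. rewrite <- vnorm_opp. f_equal. vring. Qed.

Lemma vnorm_sub_tri (X : NormedSpace) (x y z : X) :
  vnorm (vsub x z) <= vnorm (vsub x y) + vnorm (vsub y z).
Proof. replace (vsub x z) with (vadd (vsub x y) (vsub y z)) by vring. apply vnorm_triangle. Qed.

Lemma vnorm_rev (X : NormedSpace) (x y : X) : Rabs (vnorm x - vnorm y) <= vnorm (vsub x y).
Proof.
  apply Rabs_le. split.
  - pose proof (vnorm_triangle X (vsub y x) x). replace (vadd (vsub y x) x) with y in H by vring.
    rewrite vnorm_sub_sym in H. lra.
  - pose proof (vnorm_triangle X (vsub x y) y). replace (vadd (vsub x y) y) with x in H by vring. lra.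
Qed.

Lemma vnorm_sub_le (X : NormedSpace) (x y : X) : vnorm (vsub x y) <= vnorm x + vnorm y.
Proof. unfold vsub. rewrite <- (vnorm_opp X y). apply vnorm_triangle. Qed.

Lemma vnorm_eq0_iff (X : NormedSpace) (x : X) : vnorm x = 0 <-> x = vzero.
Proof. split. apply vnorm_eq0. intros ->. apply vnorm_zero. Qed.

Lemma lf_zero (X : NormedSpace) (f : X -> R) : linear_functional f -> f vzero = 0.
Proof. intros [Ha Hs]. rewrite <- (vscal_0 X vzero), Hs. ring. Qed.

Lemma lf_opp (X : NormedSpace) (f : X -> R) x : linear_functional f -> f (vopp x) = - f x.
Proof. intros [Ha Hs]. rewrite vopp_eq, Hs. ring. Qed.

Lemma lf_sub (X : NormedSpace) (f : X -> R) x y : linear_functional f -> f (vsub x y) = f x - f y.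
Proof. intros H. unfold vsub. rewrite (proj1 H), lf_opp by auto. ring. Qed.

Lemma lf_add (X : NormedSpace) (f : X -> R) x y : linear_functional f -> f (vadd x y) = f x + f y.
Proof. intros H. apply (proj1 H). Qed.

Lemma lf_scal (X : NormedSpace) (f : X -> R) a x : linear_functional f -> f (vscal a x) = a * f x.
Proof. intros H. apply (proj2 H). Qed.

Lemma lf_vsum (X : NormedSpace) (f : X -> R) g n : linear_functional f ->
  f (vsum g n) = rsum (fun i => f (g i)) n.
Proof. intros H. induction n; simpl. apply lf_zero; auto. rewrite lf_add, IHn; auto. Qed.

Lemma rsum_ext f g n : (forall i, (i < n)%nat -> f i = g i) -> rsum f n = rsum g n.
Proof. induction n; simpl; intros; auto. rewrite IHn, H; auto. Qed.

Lemma rsum_plus f g n : rsum (fun i => f i + g i) n = rsum f n + rsum g n.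
Proof. induction n; simpl. lra. rewrite IHn. ring. Qed.

Lemma rsum_mult c f n : rsum (fun i => c * f i) n = c * rsum f n.
Proof. induction n; simpl. lra. rewrite IHn. ring. Qed.

Lemma rsum_le f g n : (forall i, (i < n)%nat -> f i <= g i) -> rsum f n <= rsum g n.
Proof. induction n; simpl; intros; try lra. pose proof (H n). assert (rsum f n <= rsum g n) by (apply IHn; auto). specialize (H0 ltac:(lia)). lra. Qed.

Lemma rsum_nonneg f n : (forall i, (i < n)%nat -> 0 <= f i) -> 0 <= rsum f n.
Proof. intros. replace 0 with (rsum (fun _ => 0) n). apply rsum_le; auto. induction n; simpl; auto. rewrite IHn; auto. ring. Qed.

Lemma rsum_abs f n : Rabs (rsum f n) <= rsum (fun i => Rabs (f i)) n.
Proof. induction n; simpl. rewrite Rabs_R0; lra. eapply Rle_trans. apply Rabs_triang. lra. Qed.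

Lemma rsum_term_le f n i : (forall j, (j < n)%nat -> 0 <= f j) -> (i < n)%nat -> f i <= rsum f n.
Proof.
  induction n; intros H Hi. lia. simpl. destruct (Nat.eq_dec i n).
  - subst. assert (0 <= rsum f n) by (apply rsum_nonneg; intros; apply H; lia). lra.
  - assert (f i <= rsum f n) by (apply IHn; [intros; apply H; lia | lia]). specialize (H n ltac:(lia)). lra.
Qed.

Lemma vnorm_vsum (X : NormedSpace) (g : nat -> X) n : vnorm (vsum g n) <= rsum (fun i => vnorm (g i)) n.
Proof. induction n; simpl. rewrite vnorm_zero; lra. eapply Rle_trans. apply vnorm_triangle. lra. Qed.

Definition dset {X : NormedSpace} (f : X -> R) := fun t => exists x : X, vnorm x <= 1 /\ t = Rabs (f x).

Lemma dnorm_lub (X : NormedSpace) (f : X -> R) : dual_elem f -> is_lub (dset f) (dnorm f).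
Proof.
  intros [Hl [C HC]].
  assert (E : exists m, is_lub (dset f) m).
  { assert (B : bound (dset f)). { exists (Rmax C 0). intros t [x [Hx ->]]. eapply Rle_trans. apply HC.
      pose proof (vnorm_nonneg X x). destruct (Rle_dec 0 C).
      + rewrite Rmax_left by lra. nra. + rewrite Rmax_right by lra. nra. }
    assert (N : exists t, dset f t). { exists 0, vzero. split. rewrite vnorm_zero; lra. rewrite lf_zero, Rabs_R0; auto. }
    destruct (completeness _ B N) as [m Hm]. exists m; auto. }
  unfold dnorm. apply (epsilon_spec (inhabits 0) (is_lub (dset f))). exact E.
Qed.

Lemma dnorm_ge (X : NormedSpace) (f : X -> R) x : dual_elem f -> vnorm x <= 1 -> Rabs (f x) <= dnorm f.
Proof. intros H Hx. apply (proj1 (dnorm_lub X f H)). exists x; auto. Qed.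

Lemma dnorm_le (X : NormedSpace) (f : X -> R) M : dual_elem f ->
  (forall x, vnorm x <= 1 -> Rabs (f x) <= M) -> dnorm f <= M.
Proof. intros H HM. apply (proj2 (dnorm_lub X f H)). intros t [x [Hx ->]]. auto. Qed.

Lemma dnorm_nonneg (X : NormedSpace) (f : X -> R) : dual_elem f -> 0 <= dnorm f.
Proof. intros H. eapply Rle_trans. 2: apply (dnorm_ge X f vzero H). apply Rabs_pos. rewrite vnorm_zero; lra. Qed.

Lemma dnorm_bound (X : NormedSpace) (f : X -> R) x : dual_elem f -> Rabs (f x) <= dnorm f * vnorm x.
Proof.
  intros H. pose proof (vnorm_nonneg X x).
  destruct (Req_dec (vnorm x) 0) as [E|E].
  - apply vnorm_eq0 in E. subst. rewrite lf_zero by apply H. rewrite Rabs_R0, vnorm_zero. lra.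
  - set (y := vscal (/ vnorm x) x).
    assert (Hy : vnorm y = 1). { unfold y. rewrite vnorm_scal, Rabs_right. field. auto.
      apply Rle_ge, Rlt_le, Rinv_0_lt_compat. lra. }
    pose proof (dnorm_ge X f y H ltac:(lra)). unfold y in H1. rewrite lf_scal in H1 by apply H.
    rewrite Rabs_mult, Rabs_right in H1 by (apply Rle_ge, Rlt_le, Rinv_0_lt_compat; lra).
    apply Rmult_le_compat_r with (r := vnorm x) in H1; auto.
    replace (/ vnorm x * Rabs (f x) * vnorm x) with (Rabs (f x)) in H1 by (field; auto). auto.
Qed.

Lemma dnorm_le_C (X : NormedSpace) (f : X -> R) C : dual_elem f -> 0 <= C ->
  (forall x, Rabs (f x) <= C * vnorm x) -> dnorm f <= C.
Proof. intros H HC Hb. apply dnorm_le; auto. intros x Hx. eapply Rle_trans. apply Hb. nra. Qed.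

Lemma dnorm_ext (X : NormedSpace) (f g : X -> R) : (forall x, f x = g x) -> dnorm f = dnorm g.
Proof. intros H. apply functional_extensionality in H. now subst. Qed.

Lemma dual_add (X : NormedSpace) (f g : X -> R) : dual_elem f -> dual_elem g -> dual_elem (fun x => f x + g x).
Proof.
  intros [[Hf1 Hf2] [C HC]] [[Hg1 Hg2] [D HD]]. split. split.
  - intros. rewrite Hf1, Hg1. ring.
  - intros. rewrite Hf2, Hg2. ring.
  - exists (C + D). intros. eapply Rle_trans. apply Rabs_triang. specialize (HC x). specialize (HD x). lra.
Qed.

Lemma dual_scal (X : NormedSpace) (f : X -> R) a : dual_elem f -> dual_elem (fun x => a * f x).
Proof.
  intros [[Hf1 Hf2] [C HC]]. split. split.
  - intros. rewrite Hf1. ring.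
  - intros. rewrite Hf2. ring.
  - exists (Rabs a * C). intros. rewrite Rabs_mult. rewrite Rmult_assoc. apply Rmult_le_compat_l. apply Rabs_pos. auto.
Qed.

Lemma dual_sub (X : NormedSpace) (f g : X -> R) : dual_elem f -> dual_elem g -> dual_elem (fun x => f x - g x).
Proof.
  intros Hf Hg. pose proof (dual_add X f (fun x => -1 * g x) Hf (dual_scal X g (-1) Hg)).
  replace (fun x => f x - g x) with (fun x => f x + -1 * g x); auto.
  apply functional_extensionality. intros; ring.
Qed.

Lemma le_eps a b c : 0 <= c -> (forall eta, eta > 0 -> a <= b + eta * c) -> a <= b.
Proof.
  intros Hc H. destruct (Rle_dec a b); auto. exfalso.
  set (eta := (a - b) / (2 * (c + 1))).
  assert (Heta : eta > 0) by (unfold eta; apply Rdiv_lt_0_compat; lra).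
  specialize (H eta Heta).
  assert (eta * c < a - b).
  { unfold eta. unfold Rdiv. replace ((a - b) * / (2 * (c + 1)) * c) with ((a - b) * (c / (2 * (c + 1)))) by (field; lra).
    assert (c / (2 * (c + 1)) < 1). { apply Rmult_lt_reg_r with (2 * (c + 1)). lra. unfold Rdiv. rewrite Rmult_assoc, Rinv_l by lra. lra. }
    assert (0 <= c / (2 * (c + 1))) by (apply Rmult_le_pos; auto; left; apply Rinv_0_lt_compat; lra).
    nra. }
  lra.
Qed.


Definition lc {X : NormedSpace} (u : nat -> X) (d : nat -> R) k := vsum (fun j => vscal (d j) (u j)) k.
Definition l1 (d : nat -> R) k := rsum (fun j => Rabs (d j)) k.

Lemma l1_nonneg d k : 0 <= l1 d k.
Proof. apply rsum_nonneg. intros; apply Rabs_pos. Qed.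

Lemma lc_add {X : NormedSpace} (u : nat -> X) d e k : lc u (fun j => d j + e j) k = vadd (lc u d k) (lc u e k).
Proof. unfold lc. rewrite <- vsum_add. apply vsum_ext. intros. apply vscal_addl. Qed.

Lemma lc_scal {X : NormedSpace} (u : nat -> X) a d k : lc u (fun j => a * d j) k = vscal a (lc u d k).
Proof. unfold lc. rewrite <- vsum_scal. apply vsum_ext. intros. now rewrite vscal_assoc. Qed.

Lemma lc_sub {X : NormedSpace} (u : nat -> X) d e k : lc u (fun j => d j - e j) k = vsub (lc u d k) (lc u e k).
Proof.
  replace (fun j => d j - e j) with (fun j => d j + (-1) * e j) by (apply functional_extensionality; intros; ring).
  rewrite lc_add, lc_scal. vring.
Qed.

Lemma lc_S {X : NormedSpace} (u : nat -> X) d k : lc u d (S k) = vadd (lc u d k) (vscal (d k) (u k)).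
Proof. reflexivity. Qed.

Lemma vnorm_lc {X : NormedSpace} (u : nat -> X) d k : vnorm (lc u d k) <= rsum (fun j => Rabs (d j) * vnorm (u j)) k.
Proof. unfold lc. eapply Rle_trans. apply vnorm_vsum. apply rsum_le. intros. rewrite vnorm_scal. lra. Qed.

Lemma rsum_cv (a : nat -> nat -> R) k : (forall j, (j < k)%nat -> Un_cv (fun n => a n j) 0) ->
  Un_cv (fun n => rsum (a n) k) 0.
Proof.
  induction k; intros H; simpl.
  - intros e He. exists O. intros. rewrite R_dist_eq. auto.
  - replace 0 with (0 + 0) by ring. apply CV_plus. apply IHk. intros; apply H; lia. apply H; lia.
Qed.

Lemma le_cv_0 x (e : nat -> R) : Un_cv e 0 -> (forall n, x <= e n) -> x <= 0.
Proof.
  intros Hc Hx. destruct (Rle_dec x 0); auto. exfalso.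
  destruct (Hc x ltac:(lra)) as [N HN]. specialize (HN N (le_n N)). specialize (Hx N).
  unfold R_dist in HN. rewrite Rminus_0_r in HN. apply Rabs_def2 in HN. lra.
Qed.

Lemma vsub_eq0 (X : NormedSpace) (x y : X) : vnorm (vsub x y) <= 0 -> x = y.
Proof.
  intros H. pose proof (vnorm_nonneg X (vsub x y)). assert (vnorm (vsub x y) = 0) by lra.
  apply vnorm_eq0 in H1. replace x with (vadd (vsub x y) y) by vring. rewrite H1. apply vadd_0l.
Qed.

Lemma inv_S_pos n : 0 < / INR (S n).
Proof. apply Rinv_0_lt_compat. apply lt_0_INR. lia. Qed.

Lemma cv_inv_S : Un_cv (fun n => / INR (S n)) 0.
Proof.
  intros e He. destruct (archimed (/ e)) as [H1 _].
  assert (0 < IZR (up (/ e))) by (pose proof (Rinv_0_lt_compat e He); lra).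
  apply lt_0_IZR in H. exists (Z.to_nat (up (/ e))). intros n Hn.
  unfold R_dist. rewrite Rminus_0_r, Rabs_right by (apply Rle_ge, Rlt_le, inv_S_pos).
  apply le_INR in Hn. rewrite INR_IZR_INZ, Z2Nat.id in Hn by lia.
  assert (INR (S n) > / e) by (rewrite S_INR; lra).
  rewrite <- (Rinv_inv e). apply Rinv_lt_contravar. apply Rmult_lt_0_compat. apply Rinv_0_lt_compat; lra.
  apply lt_0_INR; lia. lra.
Qed.

Lemma small_inv e : e > 0 -> exists N, forall n, (N <= n)%nat -> / INR (S n) < e.
Proof.
  intros He. destruct (cv_inv_S e He) as [N HN]. exists N. intros n Hn. specialize (HN n Hn).
  unfold R_dist in HN. rewrite Rminus_0_r, Rabs_right in HN by (apply Rle_ge, Rlt_le, inv_S_pos). auto.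
Qed.

Lemma findim (X : NormedSpace) (v : nat -> X) m : exists k (u : nat -> X) C, 0 <= C /\
  (forall d, l1 d k <= C * vnorm (lc u d k)) /\ (forall c, exists d, lc v c m = lc u d k).
Proof.
  induction m.
  - exists O, v, 0. split. lra. split. intros. unfold l1; simpl. lra.
    intros c. exists c. reflexivity.
  - destruct IHm as [k [u [C [HC0 [HC Hrep]]]]].
    set (w := v m).
    destruct (classic (exists d0, w = lc u d0 k)) as [[d0 Hd0]|Hn].
    + exists k, u, C. split; auto. split; auto. intros c. destruct (Hrep c) as [d Hd].
      exists (fun j => d j + c m * d0 j). rewrite lc_add, lc_scal, <- Hd0, <- Hd. reflexivity.
    + assert (Hdel : exists del, del > 0 /\ forall d, del <= vnorm (vsub w (lc u d k))).
      { apply NNPP. intros Hno.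
        assert (Hs : forall n : nat, exists d, vnorm (vsub w (lc u d k)) < / INR (S n)).
        { intros n. apply NNPP. intros Hn2. apply Hno. exists (/ INR (S n)). split. apply inv_S_pos.
          intros d. apply Rnot_lt_le. intros Hl. apply Hn2. exists d. auto. }
        apply choice in Hs. destruct Hs as [D HD].
        assert (Hcj : forall j, exists l, (j < k)%nat -> Un_cv (fun n => D n j) l).
        { intros j. destruct (le_lt_dec k j) as [Hkj|Hkj].
          - exists 0. intros; lia.
          - assert (Cc : Cauchy_crit (fun n => D n j)).
            { intros e He. destruct (small_inv (e / (2 * C + 1))) as [N HN].
              { apply Rdiv_lt_0_compat; lra. }
              exists N. intros n p Hn1 Hp. unfold R_dist.
              assert (H1 : Rabs (D n j - D p j) <= l1 (fun i => D n i - D p i) k).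
              { unfold l1. apply (rsum_term_le (fun i => Rabs (D n i - D p i))). intros; apply Rabs_pos. auto. }
              specialize (HC (fun i => D n i - D p i)). rewrite lc_sub in HC.
              pose proof (vnorm_sub_tri X (lc u (D n) k) w (lc u (D p) k)).
              rewrite (vnorm_sub_sym X _ w) in H.
              pose proof (HD n). pose proof (HD p). pose proof (HN n Hn1). pose proof (HN p Hp).
              assert (vnorm (vsub (lc u (D n) k) (lc u (D p) k)) < 2 * (e / (2 * C + 1))) by lra.
              assert (C * vnorm (vsub (lc u (D n) k) (lc u (D p) k)) <= C * (2 * (e / (2 * C + 1)))) by nra.
              assert (C * (2 * (e / (2 * C + 1))) < e).
              { unfold Rdiv. replace (C * (2 * (e * / (2 * C + 1)))) with (e * ((2 * C) / (2 * C + 1))) by (field; lra).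
                assert (2 * C / (2 * C + 1) < 1). { apply Rmult_lt_reg_r with (2 * C + 1). lra. unfold Rdiv. rewrite Rmult_assoc, Rinv_l by lra. lra. }
                nra. }
              lra. }
            destruct (R_complete _ Cc) as [l Hl]. exists l. auto. }
        apply choice in Hcj. destruct Hcj as [L HL].
        apply Hn. exists L. apply vsub_eq0.
        set (e := fun n => vnorm (vsub w (lc u (D n) k)) + rsum (fun j => Rabs (D n j - L j) * vnorm (u j)) k).
        apply (le_cv_0 _ e).
        - unfold e. replace 0 with (0 + 0) by ring. apply CV_plus.
          + intros ep Hep. destruct (small_inv ep Hep) as [N HN]. exists N. intros n Hn'.
            unfold R_dist. rewrite Rminus_0_r, Rabs_right by (apply Rle_ge, vnorm_nonneg).
            pose proof (HD n). pose proof (HN n Hn'). lra.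
          + apply rsum_cv. intros j Hj. replace 0 with (0 * vnorm (u j)) by ring.
            apply (CV_mult _ (fun _ => vnorm (u j))). 2: { intros ep Hep; exists O; intros; rewrite R_dist_eq; auto. }
            intros ep Hep. destruct (HL j Hj ep Hep) as [N HN]. exists N. intros n Hn'. specialize (HN n Hn').
            unfold R_dist in *. rewrite Rminus_0_r, Rabs_Rabsolu. auto.
        - intros n. unfold e. eapply Rle_trans. apply (vnorm_sub_tri X w (lc u (D n) k)).
          apply Rplus_le_compat_l. rewrite <- lc_sub. eapply Rle_trans. apply vnorm_lc. apply Req_le. reflexivity. }
      destruct Hdel as [del [Hdel0 Hdel]].
      set (u' := fun j => if Nat.ltb j k then u j else w).
      assert (Hu' : forall d, lc u' d (S k) = vadd (lc u d k) (vscal (d k) w)).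
      { intros d. rewrite lc_S. unfold u' at 2. rewrite (proj2 (Nat.ltb_ge k k)) by lia. f_equal.
        unfold lc. apply vsum_ext. intros i Hi. unfold u'. rewrite (proj2 (Nat.ltb_lt i k)) by auto. auto. }
      exists (S k), u', (/ del + C * (1 + vnorm w / del)).
      assert (0 <= vnorm w) by apply vnorm_nonneg.
      assert (0 < / del) by (apply Rinv_0_lt_compat; lra).
      assert (0 <= vnorm w / del) by (unfold Rdiv; nra).
      split. nra. split.
      * intros d. rewrite Hu'. set (z := vadd (lc u d k) (vscal (d k) w)).
        assert (Hz0 : 0 <= vnorm z) by apply vnorm_nonneg.
        assert (Hdk : Rabs (d k) <= vnorm z / del).
        { destruct (Req_dec (d k) 0) as [E|E].
          - rewrite E, Rabs_R0. unfold Rdiv. nra.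
          - specialize (Hdel (fun j => - d j / d k)).
            assert (Ez : z = vscal (d k) (vsub w (lc u (fun j => - d j / d k) k))).
            { replace (fun j => - d j / d k) with (fun j => (- / d k) * d j) by (apply functional_extensionality; intros; field; auto).
              rewrite lc_scal. unfold z. vring. }
            rewrite Ez, vnorm_scal. apply (Rmult_le_reg_r del). lra. unfold Rdiv.
            rewrite Rmult_assoc, Rinv_l by lra. pose proof (Rabs_pos (d k)). nra. }
        assert (Hl : vnorm (lc u d k) <= vnorm z + Rabs (d k) * vnorm w).
        { replace (lc u d k) with (vsub z (vscal (d k) w)) by (unfold z; vring).
          eapply Rle_trans. apply vnorm_sub_le. rewrite vnorm_scal. lra. }
        unfold l1. simpl. fold (l1 d k). specialize (HC d).
        assert (Rabs (d k) * vnorm w <= vnorm z / del * vnorm w) by (apply Rmult_le_compat_r; auto).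
        assert (vnorm z / del * vnorm w = vnorm z * (vnorm w / del)) by (unfold Rdiv; ring).
        assert (vnorm z / del = / del * vnorm z) by (unfold Rdiv; ring).
        assert (C * vnorm (lc u d k) <= C * (vnorm z + vnorm z * (vnorm w / del))) by nra.
        nra.
      * intros c. destruct (Hrep c) as [d Hd]. exists (fun j => if Nat.ltb j k then d j else c m).
        rewrite Hu'. rewrite (proj2 (Nat.ltb_ge k k)) by lia. rewrite lc_S. f_equal.
        rewrite Hd. unfold lc. apply vsum_ext. intros i Hi. rewrite (proj2 (Nat.ltb_lt i k)) by auto. auto.
Qed.

Definition wnull {X : NormedSpace} (h : nat -> X -> R) :=
  (forall n, dual_elem (h n)) /\ (forall x, Un_cv (fun n => h n x) 0).

Lemma cv_0_abs (e : nat -> R) : Un_cv e 0 -> forall eps, eps > 0 -> exists N, forall n, (N <= n)%nat -> e n < eps.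
Proof.
  intros H eps He. destruct (H eps He) as [N HN]. exists N. intros n Hn. specialize (HN n Hn).
  unfold R_dist in HN. rewrite Rminus_0_r in HN. apply Rabs_def2 in HN. lra.
Qed.

Lemma fin_rank_est (X : NormedSpace) (T : X -> X) (h : nat -> X -> R) :
  bounded_op T -> finite_rank T -> wnull h ->
  exists e, Un_cv e 0 /\ forall n y, Rabs (h n (T y)) <= e n * vnorm y.
Proof.
  intros [CT HCT] [m [v Hv]] [Hdu Hw].
  destruct (findim X v m) as [k [u [C [HC0 [HC Hrep]]]]].
  exists (fun n => C * CT * rsum (fun j => Rabs (h n (u j))) k). split.
  - replace 0 with (C * CT * 0) by ring. apply (CV_mult (fun _ => C * CT)).
    { intros ep Hep; exists O; intros; rewrite R_dist_eq; auto. }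
    apply rsum_cv. intros j Hj. intros ep Hep. destruct (Hw (u j) ep Hep) as [N HN]. exists N. intros n Hn.
    specialize (HN n Hn). unfold R_dist in *. rewrite Rminus_0_r in *. rewrite Rabs_Rabsolu. auto.
  - intros n y. destruct (Hv y) as [c Hc]. destruct (Hrep c) as [d Hd].
    fold (lc v c m) in Hc. rewrite Hc, Hd.
    unfold lc. rewrite lf_vsum by apply (Hdu n).
    set (s := rsum (fun j => Rabs (h n (u j))) k).
    assert (Hs0 : 0 <= s) by (apply rsum_nonneg; intros; apply Rabs_pos).
    eapply Rle_trans. apply rsum_abs.
    eapply Rle_trans with (rsum (fun j => Rabs (d j) * s) k).
    { apply rsum_le. intros i Hi. rewrite lf_scal by apply (Hdu n). rewrite Rabs_mult.
      apply Rmult_le_compat_l. apply Rabs_pos. apply (rsum_term_le (fun j => Rabs (h n (u j)))); auto. intros; apply Rabs_pos. }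
    replace (rsum (fun j => Rabs (d j) * s) k) with (l1 d k * s).
    2: { unfold l1. rewrite Rmult_comm, <- rsum_mult. apply rsum_ext. intros; ring. }
    specialize (HC d). specialize (HCT y). rewrite Hc, Hd in HCT.
    assert (l1 d k <= C * CT * vnorm y) by nra. nra.
Qed.

Lemma PN_est (X : NormedSpace) (Q : nat -> X -> X) (h : nat -> X -> R) :
  is_FDD X Q -> wnull h -> forall N,
  exists e, Un_cv e 0 /\ forall n y, Rabs (h n (vsum (fun j => Q j y) N)) <= e n * vnorm y.
Proof.
  intros [HQ _] Hh N. induction N.
  - exists (fun _ => 0). split. intros ep Hep; exists O; intros; rewrite R_dist_eq; auto.
    intros n y. simpl. rewrite lf_zero by apply (proj1 Hh n). rewrite Rabs_R0. lra.
  - destruct IHN as [e [He Hb]].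
    destruct (HQ N) as [_ [Hbd Hfr]].
    destruct (fin_rank_est X (Q N) h Hbd Hfr Hh) as [e' [He' Hb']].
    exists (fun n => e n + e' n). split.
    + replace 0 with (0 + 0) by ring. apply CV_plus; auto.
    + intros n y. simpl. rewrite lf_add by apply (proj1 Hh n). eapply Rle_trans. apply Rabs_triang.
      specialize (Hb n y). specialize (Hb' n y). lra.
Qed.

Lemma conv_shift (X : NormedSpace) (u : nat -> X) l N :
  conv u l -> Un_cv (fun n => vnorm (vsub (u (n + N)%nat) l)) 0.
Proof.
  intros H ep Hep. destruct (H ep Hep) as [M HM]. exists M. intros n Hn. unfold R_dist.
  rewrite Rminus_0_r, Rabs_right by (apply Rle_ge, vnorm_nonneg). apply HM. lia.
Qed.

Lemma T_bound (X : NormedSpace) (Q : nat -> X -> X) N y : is_1UFDD X Q ->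
  vnorm (vsub (vscal 2 (vsum (fun j => Q j y) N)) y) <= vnorm y.
Proof.
  intros [[_ [_ [_ Hconv]]] Hunc].
  set (Sm := fun n => vsum (fun j => Q j y) n).
  set (E := fun n => vsum (fun j => vscal (if Nat.ltb j N then 1 else -1) (Q j y)) n).
  assert (HE : forall n, vadd (E n) (Sm n) = vscal 2 (Sm (Nat.min n N))).
  { induction n.
    - simpl. unfold E, Sm; simpl. rewrite vscal_zero. apply vadd_0l.
    - unfold E, Sm in *. cbn [vsum].
      set (En := vsum (fun j : nat => vscal (if j <? N then 1 else -1) (Q j y)) n) in *.
      set (Sn := vsum (fun j : nat => Q j y) n) in *.
      destruct (Nat.ltb n N) eqn:Hn.
      + apply Nat.ltb_lt in Hn. replace (Nat.min (Datatypes.S n) N) with (Datatypes.S n) by lia.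
        replace (Nat.min n N) with n in IHn by lia. cbn [vsum]. fold Sn. fold Sn in IHn.
        assert (En = vsub (vscal 2 Sn) Sn) by (rewrite <- IHn; vring). rewrite H. vring.
      + apply Nat.ltb_ge in Hn. replace (Nat.min (Datatypes.S n) N) with (Nat.min n N) by lia.
        rewrite <- IHn. vring. }
  assert (HT : forall n, (N <= n)%nat -> vsub (vsub (vscal 2 (Sm N)) y) (E n) = vsub (Sm n) y).
  { intros n Hn. rewrite <- (Nat.min_r n N) at 1 by lia. rewrite <- HE. vring. }
  fold (Sm N).
  assert (H : vnorm (vsub (vscal 2 (Sm N)) y) - vnorm y <= 0).
  { apply (le_cv_0 _ _ (conv_shift X Sm y N (Hconv y))). intros n.
    specialize (Hunc y (n + N)%nat (fun j => Nat.ltb j N)).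
    pose proof (vnorm_triangle X (E (n + N)%nat) (vsub (vsub (vscal 2 (Sm N)) y) (E (n + N)%nat))).
    rewrite HT in H by lia.
    replace (vadd (E (n + N)%nat) (vsub (Sm (n + N)%nat) y)) with (vsub (vscal 2 (Sm N)) y) in H.
    2: { rewrite <- HT by lia. vring. }
    unfold E in H. lra. }
  lra.
Qed.

Lemma dual_comp (X : NormedSpace) (f : X -> R) (T : X -> X) :
  dual_elem f -> linear_op T -> bounded_op T -> dual_elem (fun x => f (T x)).
Proof.
  intros Hf [HT1 HT2] [C HC]. split. split.
  - intros. rewrite HT1. apply lf_add, Hf.
  - intros. rewrite HT2. apply lf_scal, Hf.
  - exists (dnorm f * C). intros x. eapply Rle_trans. apply dnorm_bound; auto.
    rewrite Rmult_assoc. apply Rmult_le_compat_l. apply dnorm_nonneg; auto. auto.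
Qed.

Lemma dual_zero (X : NormedSpace) : dual_elem (fun _ : X => 0).
Proof. split. split; intros; ring. exists 0. intros. rewrite Rabs_R0. lra. Qed.

Lemma dual_rsum (X : NormedSpace) (F : nat -> X -> R) N :
  (forall j, dual_elem (F j)) -> dual_elem (fun x => rsum (fun j => F j x) N).
Proof.
  intros H. induction N; simpl. apply dual_zero. apply dual_add; auto.
Qed.

Lemma key1 (X : NormedSpace) (Q : nat -> X -> X) (xs : X -> R) (h : nat -> X -> R) :
  is_1UFDD X Q -> shrinking_FDD X Q -> dual_elem xs -> wnull h ->
  forall eps, eps > 0 -> exists M, forall n, (M <= n)%nat ->
    dnorm (fun x => xs x + h n x) <= dnorm (fun x => xs x - h n x) + eps.
Proof.
  intros HU HS Hxs Hh eps Heps.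
  destruct (cv_0_abs _ (HS xs Hxs) (eps / 4) ltac:(lra)) as [N HN]. specialize (HN N (le_n N)).
  set (g := fun x => xs x - rsum (fun j => xs (Q j x)) N) in HN.
  assert (Hg : dual_elem g).
  { apply dual_sub; auto. apply dual_rsum. intros j.
    destruct HU as [[HQ _] _]. destruct (HQ j) as [Hl [Hb _]]. apply dual_comp; auto. }
  destruct (PN_est X Q h (proj1 HU) Hh N) as [e [He Hb]].
  destruct (cv_0_abs _ He (eps / 4) ltac:(lra)) as [M HM].
  exists M. intros n Hn.
  assert (Hd1 : dual_elem (fun x => xs x + h n x)) by (apply dual_add; auto; apply (proj1 Hh)).
  assert (Hd2 : dual_elem (fun x => xs x - h n x)) by (apply dual_sub; auto; apply (proj1 Hh)).
  apply dnorm_le_C; auto. pose proof (dnorm_nonneg X _ Hd2); lra.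
  intros y.
  set (P := vsum (fun j => Q j y) N).
  set (Ty := vsub (vscal 2 P) y).
  assert (HT : vnorm Ty <= vnorm y) by apply (T_bound X Q N y HU).
  assert (Hl : linear_functional xs) by apply Hxs.
  assert (Hln : linear_functional (h n)) by apply (proj1 Hh n).
  assert (Eq : xs y + h n y = (xs Ty - h n Ty) + 2 * g y + 2 * h n P).
  { unfold Ty, g. rewrite !lf_sub, !lf_scal by auto. unfold P. rewrite (lf_vsum X xs) by auto. ring. }
  rewrite Eq.
  pose proof (dnorm_bound X _ Ty Hd2) as HH. cbv beta in HH. pose proof (dnorm_bound X g y Hg).
  pose proof (Hb n y). pose proof (HM n Hn).
  pose proof (dnorm_nonneg X _ Hd2). pose proof (vnorm_nonneg X y).
  assert (Rabs (g y) <= eps / 4 * vnorm y) by nra.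
  assert (Rabs (h n P) <= eps / 4 * vnorm y) by (eapply Rle_trans; [apply (Hb n y)|]; nra).
  assert (dnorm (fun x => xs x - h n x) * vnorm Ty <= dnorm (fun x => xs x - h n x) * vnorm y) by nra.
  pose proof (Rabs_triang (xs Ty - h n Ty + 2 * g y) (2 * h n P)) as T1. pose proof (Rabs_triang (xs Ty - h n Ty) (2 * g y)) as T2.
  rewrite !Rabs_mult, (Rabs_right 2) in T1, T2 by lra. nra.
Qed.

Lemma au_from_key (X : NormedSpace) :
  (forall (xs : X -> R) (h : nat -> X -> R), dual_elem xs -> wnull h -> forall eps, eps > 0 -> exists M, forall n, (M <= n)%nat ->
    dnorm (fun x => xs x + h n x) <= dnorm (fun x => xs x - h n x) + eps) ->
  forall (xs : X -> R) (xn : nat -> X -> R),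
    dual_elem xs -> (forall n, dual_elem (xn n)) ->
    (forall x, Un_cv (fun n => xn n x) 0) ->
    Un_cv (fun n => dnorm (fun x => xs x + xn n x) - dnorm (fun x => xs x - xn n x)) 0.
Proof.
  intros K xs xn Hxs Hd Hw eps Heps.
  assert (W1 : wnull xn) by (split; auto).
  assert (W2 : wnull (fun n x => - xn n x)).
  { split. intros n. replace (fun x => - xn n x) with (fun x => -1 * xn n x). apply dual_scal; auto.
    apply functional_extensionality; intros; ring.
    intros x. replace 0 with (- 0) by ring. apply CV_opp. auto. }
  destruct (K xs xn Hxs W1 (eps / 2) ltac:(lra)) as [M1 H1].
  destruct (K xs _ Hxs W2 (eps / 2) ltac:(lra)) as [M2 H2].
  exists (Nat.max M1 M2). intros n Hn. specialize (H1 n ltac:(lia)). specialize (H2 n ltac:(lia)).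
  rewrite (dnorm_ext X (fun x => xs x + - xn n x) (fun x => xs x - xn n x)) in H2 by (intros; ring).
  rewrite (dnorm_ext X (fun x => xs x - - xn n x) (fun x => xs x + xn n x)) in H2 by (intros; ring).
  unfold R_dist. rewrite Rminus_0_r. apply Rabs_def1; lra.
Qed.

Definition ratn (n : nat) : R :=
  let (a, r) := Cantor.of_nat n in let (b, c) := Cantor.of_nat r in (INR a - INR b) / INR (S c).

Lemma ratn_dense x del : del > 0 -> exists n, Rabs (ratn n - x) < del.
Proof.
  intros Hd. destruct (small_inv del Hd) as [c Hc]. specialize (Hc c (le_n c)).
  set (D := INR (S c)). assert (HD : 0 < D) by (apply lt_0_INR; lia).
  set (z := up (x * D)). destruct (archimed (x * D)) as [H1 H2]. fold z in H1, H2.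
  exists (Cantor.to_nat (Z.to_nat z, Cantor.to_nat (Z.to_nat (- z), c))).
  unfold ratn. rewrite !Cantor.cancel_of_to.
  assert (E : INR (Z.to_nat z) - INR (Z.to_nat (- z)) = IZR z).
  { rewrite !INR_IZR_INZ. destruct (Z_le_gt_dec 0 z).
    - rewrite Z2Nat.id by lia. replace (Z.to_nat (- z)) with O by lia. simpl. lra.
    - replace (Z.to_nat z) with O by lia. rewrite Z2Nat.id by lia. rewrite opp_IZR. simpl. lra. }
  rewrite E. fold D.
  assert (0 < IZR z / D - x <= / D).
  { split.
    - apply Rmult_lt_reg_r with D; auto. unfold Rdiv. rewrite Rmult_minus_distr_r, Rmult_assoc, Rinv_l by lra. lra.
    - apply Rmult_le_reg_r with D; auto. unfold Rdiv. rewrite Rmult_minus_distr_r, Rmult_assoc, Rinv_l by lra. lra. }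
  rewrite Rabs_right by lra. fold D in Hc. lra.
Qed.

Fixpoint lev {X : NormedSpace} (w : nat -> X) (L : nat) : nat -> X :=
  match L with
  | O => fun _ => vzero
  | S L => fun n => let (a, b) := Cantor.of_nat n in let (k, z) := Cantor.of_nat b in
                    vadd (lev w L a) (vscal (ratn z) (w k))
  end.

Definition dseq {X : NormedSpace} (w : nat -> X) (n : nat) : X :=
  let (L, m) := Cantor.of_nat n in lev w L m.

Definition Apx {X : NormedSpace} (w : nat -> X) (x : X) :=
  forall eps, eps > 0 -> exists n, vnorm (vsub x (dseq w n)) < eps.

Lemma Apx_zero (X : NormedSpace) (w : nat -> X) : Apx w vzero.
Proof.
  intros eps He. exists (Cantor.to_nat (O, O)). unfold dseq. rewrite Cantor.cancel_of_to. simpl.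
  replace (vsub vzero vzero) with (@vzero X) by vring. rewrite vnorm_zero. lra.
Qed.

Lemma Apx_step (X : NormedSpace) (w : nat -> X) x c k : Apx w x -> Apx w (vadd x (vscal c (w k))).
Proof.
  intros H eps He. destruct (H (eps / 2) ltac:(lra)) as [n0 Hn0].
  destruct (ratn_dense c (eps / 2 / (vnorm (w k) + 1))) as [z Hz].
  { pose proof (vnorm_nonneg X (w k)). apply Rdiv_lt_0_compat; lra. }
  destruct (Cantor.of_nat n0) as [L m] eqn:E.
  exists (Cantor.to_nat (S L, Cantor.to_nat (m, Cantor.to_nat (k, z)))).
  unfold dseq at 1. rewrite Cantor.cancel_of_to. cbn [lev]. rewrite !Cantor.cancel_of_to.
  unfold dseq in Hn0. rewrite E in Hn0.
  replace (vsub (vadd x (vscal c (w k))) (vadd (lev w L m) (vscal (ratn z) (w k))))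
    with (vadd (vsub x (lev w L m)) (vscal (c - ratn z) (w k))) by vring.
  eapply Rle_lt_trans. apply vnorm_triangle. rewrite vnorm_scal.
  pose proof (vnorm_nonneg X (w k)).
  assert (Rabs (c - ratn z) * vnorm (w k) <= eps / 2 / (vnorm (w k) + 1) * vnorm (w k)).
  { apply Rmult_le_compat_r; auto. rewrite Rabs_minus_sym. lra. }
  assert (eps / 2 / (vnorm (w k) + 1) * vnorm (w k) <= eps / 2).
  { unfold Rdiv. rewrite Rmult_assoc. rewrite <- (Rmult_1_r (eps * / 2)) at 2. apply Rmult_le_compat_l. lra.
    apply Rmult_le_reg_l with (vnorm (w k) + 1). lra. rewrite <- Rmult_assoc, Rinv_r by lra. lra. }
  lra.
Qed.

Lemma Apx_sep (X : NormedSpace) (w : nat -> X) :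
  (forall x eps, eps > 0 -> exists a, Apx w a /\ vnorm (vsub x a) < eps) -> separable X.
Proof.
  intros H. exists (dseq w). intros x eps He. destruct (H x (eps / 2) ltac:(lra)) as [a [Ha Hxa]].
  destruct (Ha (eps / 2) ltac:(lra)) as [n Hn]. exists n.
  eapply Rle_lt_trans. apply (vnorm_sub_tri X x a). lra.
Qed.

Lemma sep_FDD (X : NormedSpace) (Q : nat -> X -> X) : is_FDD X Q -> separable X.
Proof.
  intros [HQ [_ [_ Hconv]]].
  assert (Hc : forall j, exists (mv : nat * (nat -> X)), forall x, exists c : nat -> R,
     Q j x = vsum (fun i => vscal (c i) (snd mv i)) (fst mv)).
  { intros j. destruct (HQ j) as [_ [_ [m [v Hv]]]]. exists (m, v). auto. }
  apply choice in Hc. destruct Hc as [mv Hmv].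
  set (w := fun k => let (j, i) := Cantor.of_nat k in snd (mv j) i).
  apply (Apx_sep X w).
  assert (Hlc : forall j x c m, Apx w x -> Apx w (vadd x (vsum (fun i => vscal (c i) (snd (mv j) i)) m))).
  { intros j x c m Hx. induction m.
    - simpl. rewrite vadd_0r. auto.
    - simpl. replace (vadd x (vadd (vsum (fun i => vscal (c i) (snd (mv j) i)) m) (vscal (c m) (snd (mv j) m))))
        with (vadd (vadd x (vsum (fun i => vscal (c i) (snd (mv j) i)) m)) (vscal (c m) (w (Cantor.to_nat (j, m))))).
      apply Apx_step; auto.
      unfold w. rewrite Cantor.cancel_of_to. vring. }
  assert (HP : forall y N, Apx w (vsum (fun j => Q j y) N)).
  { intros y N. induction N. apply Apx_zero. simpl. destruct (Hmv N y) as [c Hc]. rewrite Hc. apply Hlc. auto. }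
  intros x eps He. destruct (Hconv x eps He) as [N HN]. exists (vsum (fun j => Q j x) N). split. auto.
  rewrite vnorm_sub_sym. apply HN. lia.
Qed.

Section QuotSec.
Variables (Y : NormedSpace) (Z : Y -> Prop) (Q : NormedSpace) (q : Y -> Q).
Hypothesis Hq : is_quotient_map Y Z Q q.

Lemma q_zero : q vzero = vzero.
Proof. destruct Hq as [_ [Hs _]]. rewrite <- (vscal_0 Y vzero), Hs. apply vscal_0. Qed.

Lemma q_sub x y : q (vsub x y) = vsub (q x) (q y).
Proof. destruct Hq as [Ha [Hs _]]. unfold vsub. rewrite Ha, !vopp_eq, Hs. auto. Qed.

Lemma q_norm y : vnorm (q y) <= vnorm y.
Proof.
  destruct Hq as [_ [_ [_ [Hk [Hn _]]]]]. assert (Z vzero) by (apply Hk, q_zero).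
  specialize (Hn y vzero H). rewrite vadd_0r in Hn. auto.
Qed.

Lemma q_dual (f : Q -> R) : dual_elem f -> dual_elem (fun y => f (q y)).
Proof.
  intros Hf. destruct Hq as [Ha [Hs _]]. split. split.
  - intros. rewrite Ha. apply lf_add, Hf.
  - intros. rewrite Hs. apply lf_scal, Hf.
  - exists (dnorm f). intros y. eapply Rle_trans. apply dnorm_bound; auto.
    apply Rmult_le_compat_l. apply dnorm_nonneg; auto. apply q_norm.
Qed.

Lemma dnorm_q (f : Q -> R) : dual_elem f -> dnorm (fun y => f (q y)) = dnorm f.
Proof.
  intros Hf. pose proof (q_dual f Hf) as Hfq. apply Rle_antisym.
  - apply dnorm_le_C; auto. apply dnorm_nonneg; auto. intros y. eapply Rle_trans. apply dnorm_bound; auto.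
    apply Rmult_le_compat_l. apply dnorm_nonneg; auto. apply q_norm.
  - apply dnorm_le; auto. intros w Hw.
    apply (le_eps _ _ (dnorm (fun y => f (q y)))). apply dnorm_nonneg; auto.
    intros eta Heta. destruct Hq as [Ha [Hs [Hsurj [Hk [Hn Hinf]]]]].
    destruct (Hsurj w) as [y0 Hy0]. destruct (Hinf y0 eta Heta) as [z [Hz Hyz]].
    assert (E : q (vadd y0 z) = w) by (rewrite Ha, (proj2 (Hk z) Hz), vadd_0r; auto).
    rewrite <- E. eapply Rle_trans. apply (dnorm_bound Y _ (vadd y0 z) Hfq). cbv beta.
    rewrite Hy0 in Hyz. pose proof (dnorm_nonneg Y _ Hfq). nra.
Qed.

Lemma quot_sep : separable Y -> separable Q.
Proof.
  intros [d Hd]. exists (fun n => q (d n)). intros w eps He. destruct Hq as [_ [_ [Hsurj _]]].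
  destruct (Hsurj w) as [y <-]. destruct (Hd y eps He) as [n Hn]. exists n.
  rewrite <- q_sub. eapply Rle_lt_trans. apply q_norm. auto.
Qed.

Lemma quot_au : has_au_star Y -> has_au_star Q.
Proof.
  intros [Hs Hau]. split. apply quot_sep; auto.
  intros xs xn Hxs Hxn Hw.
  pose proof (Hau (fun y => xs (q y)) (fun n y => xn n (q y)) (q_dual xs Hxs) (fun n => q_dual (xn n) (Hxn n))
    (fun y => Hw (q y))) as H.
  cbv beta in H.
  assert (E : forall n, dnorm (fun y => xs (q y) + xn n (q y)) - dnorm (fun y => xs (q y) - xn n (q y)) =
     dnorm (fun x => xs x + xn n x) - dnorm (fun x => xs x - xn n x)).
  { intros n. rewrite (dnorm_q (fun x => xs x + xn n x)), (dnorm_q (fun x => xs x - xn n x)); auto.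
    apply dual_sub; auto. apply dual_add; auto. }
  intros eps He. destruct (H eps He) as [N HN]. exists N. intros n Hn. rewrite <- E. auto.
Qed.

End QuotSec.

Definition subsp {Y : NormedSpace} (S : Y -> Prop) :=
  S vzero /\ (forall x y, S x -> S y -> S (vadd x y)) /\ (forall a x, S x -> S (vscal a x)).

Definition good {Y : NormedSpace} (c : R) (S : Y -> Prop) (psi : Y -> R) :=
  subsp S /\ (forall x y, S x -> S y -> psi (vadd x y) = psi x + psi y) /\
  (forall a x, S x -> psi (vscal a x) = a * psi x) /\ (forall x, S x -> Rabs (psi x) <= c * vnorm x).

Lemma good_sub (Y : NormedSpace) c S (psi : Y -> R) x y : good c S psi -> S x -> S y ->
  S (vsub x y) /\ psi (vsub x y) = psi x - psi y.
Proof.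
  intros [[H0 [Ha Hs]] [Pa [Ps Pb]]] Hx Hy. unfold vsub. rewrite vopp_eq. split.
  - apply Ha; auto.
  - rewrite Pa, Ps; auto. ring.
Qed.

Lemma cv_dist_tri (a b : nat -> R) l : Un_cv a l -> Un_cv (fun n => b n - a n) 0 -> Un_cv b l.
Proof.
  intros Ha Hb. replace l with (l + 0) by ring.
  replace b with (fun n => a n + (b n - a n)) by (apply functional_extensionality; intros; ring).
  apply CV_plus; auto.
Qed.

Lemma cv_squeeze0 (a b : nat -> R) : Un_cv b 0 -> (forall n, Rabs (a n) <= b n) -> Un_cv a 0.
Proof.
  intros Hb H e He. destruct (Hb e He) as [N HN]. exists N. intros n Hn. specialize (HN n Hn). specialize (H n).
  unfold R_dist in *. rewrite Rminus_0_r in *. apply Rabs_def2 in HN. lra.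
Qed.

Lemma extend_dense (Y : NormedSpace) (d : nat -> Y) (U : Y -> Prop) (psi : Y -> R) c :
  0 <= c -> good c U psi -> (forall n, U (d n)) ->
  (forall x eps, eps > 0 -> exists n, vnorm (vsub x (d n)) < eps) ->
  exists Phi, dual_elem Phi /\ (forall x, U x -> Phi x = psi x) /\ (forall y, Rabs (Phi y) <= c * vnorm y).
Proof.
  intros Hc Hg Hd Hdense.
  assert (Ha : forall y k, exists s, U s /\ vnorm (vsub s y) < / INR (S k)).
  { intros y k. destruct (Hdense y (/ INR (S k)) (inv_S_pos k)) as [n Hn]. exists (d n). split; auto.
    rewrite vnorm_sub_sym; auto. }
  assert (Ha' : forall y, exists s : nat -> Y, forall k, U (s k) /\ vnorm (vsub (s k) y) < / INR (S k)).
  { intros y. apply (choice (fun k s => U s /\ vnorm (vsub s y) < / INR (S k))). apply Ha. }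
  apply choice in Ha'. destruct Ha' as [a Ha2].
  assert (Hap : forall y, Un_cv (fun k => vnorm (vsub (a y k) y)) 0).
  { intros y. apply (cv_squeeze0 _ (fun k => / INR (S k))). apply cv_inv_S.
    intros n. rewrite Rabs_right by (apply Rle_ge, vnorm_nonneg). left; apply Ha2. }
  assert (Hdiff : forall (s t : nat -> Y) y, (forall k, U (s k)) -> (forall k, U (t k)) ->
            Un_cv (fun k => vnorm (vsub (s k) y)) 0 -> Un_cv (fun k => vnorm (vsub (t k) y)) 0 ->
            Un_cv (fun k => psi (s k) - psi (t k)) 0).
  { intros s t y Hs Ht Hsy Hty. apply (cv_squeeze0 _ (fun k => c * (vnorm (vsub (s k) y) + vnorm (vsub (t k) y)))).
    - replace 0 with (c * (0 + 0)) by ring. apply CV_mult. intros e He; exists O; intros; rewrite R_dist_eq; auto.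
      apply CV_plus; auto.
    - intros k. destruct (good_sub Y c U psi (s k) (t k) Hg (Hs k) (Ht k)) as [Hu He]. rewrite <- He.
      eapply Rle_trans. apply (proj2 (proj2 (proj2 Hg))). auto. apply Rmult_le_compat_l; auto.
      eapply Rle_trans. apply (vnorm_sub_tri Y _ y). rewrite (vnorm_sub_sym Y y). lra. }
  assert (HL : forall y, exists L, Un_cv (fun k => psi (a y k)) L).
  { intros y. assert (Cc : Cauchy_crit (fun k => psi (a y k))).
    { intros e He. pose proof (Hdiff (fun k => a y k) (fun k => a y k) y (fun k => proj1 (Ha2 y k)) (fun k => proj1 (Ha2 y k)) (Hap y) (Hap y)).
      destruct (Hap y (e / (2 * (c + 1))) ltac:(apply Rdiv_lt_0_compat; lra)) as [N HN].
      exists N. intros n m Hn Hm. unfold R_dist.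
      destruct (good_sub Y c U psi (a y n) (a y m) Hg (proj1 (Ha2 y n)) (proj1 (Ha2 y m))) as [Hu Hee]. rewrite <- Hee.
      eapply Rle_lt_trans. apply (proj2 (proj2 (proj2 Hg))). auto.
      pose proof (HN n Hn). pose proof (HN m Hm). unfold R_dist in *. rewrite Rminus_0_r in *.
      rewrite Rabs_right in * by (apply Rle_ge, vnorm_nonneg).
      pose proof (vnorm_sub_tri Y (a y n) y (a y m)) as T3. rewrite (vnorm_sub_sym Y y) in T3.
      assert (vnorm (vsub (a y n) (a y m)) < 2 * (e / (2 * (c + 1)))) by lra.
      assert (2 * (e / (2 * (c + 1))) = e / (c + 1)) by (field; lra).
      assert (c * vnorm (vsub (a y n) (a y m)) <= c * (e / (c + 1))) by nra.
      assert (c * (e / (c + 1)) < e).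
      { unfold Rdiv. replace (c * (e * / (c + 1))) with (e * (c / (c + 1))) by (field; lra).
        assert (c / (c + 1) < 1). { apply Rmult_lt_reg_r with (c + 1). lra. unfold Rdiv. rewrite Rmult_assoc, Rinv_l by lra. lra. }
        nra. }
      lra. }
    destruct (R_complete _ Cc) as [L HL]. exists L; auto. }
  apply choice in HL. destruct HL as [Phi HPhi].
  assert (Key : forall (s : nat -> Y) y, (forall k, U (s k)) -> Un_cv (fun k => vnorm (vsub (s k) y)) 0 ->
            Un_cv (fun k => psi (s k)) (Phi y)).
  { intros s y Hs Hsy. apply (cv_dist_tri (fun k => psi (a y k))). auto.
    apply (Hdiff s (a y) y); auto. intros k; apply Ha2. }
  assert (Hsum : forall y1 y2, Un_cv (fun k => vnorm (vsub (vadd (a y1 k) (a y2 k)) (vadd y1 y2))) 0).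
  { intros y1 y2. apply (cv_squeeze0 _ (fun k => vnorm (vsub (a y1 k) y1) + vnorm (vsub (a y2 k) y2))).
    replace 0 with (0 + 0) by ring. apply CV_plus; auto.
    intros k. rewrite Rabs_right by (apply Rle_ge, vnorm_nonneg).
    replace (vsub (vadd (a y1 k) (a y2 k)) (vadd y1 y2)) with (vadd (vsub (a y1 k) y1) (vsub (a y2 k) y2)) by vring.
    apply vnorm_triangle. }
  destruct Hg as [[U0 [Uadd Uscal]] [Padd [Pscal Pb]]].
  assert (Hbd : forall y, Rabs (Phi y) <= c * vnorm y).
  { intros y. apply (le_eps _ _ 2). lra. intros eta Heta.
    destruct (HPhi y eta Heta) as [N1 HN1]. destruct (Hap y (eta / (c + 1)) ltac:(apply Rdiv_lt_0_compat; lra)) as [N2 HN2].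
    set (k := Nat.max N1 N2). specialize (HN1 k ltac:(lia)). specialize (HN2 k ltac:(lia)).
    unfold R_dist in *. rewrite Rminus_0_r, Rabs_right in HN2 by (apply Rle_ge, vnorm_nonneg).
    pose proof (Pb (a y k) (proj1 (Ha2 y k))) as B1.
    pose proof (vnorm_triangle Y (vsub (a y k) y) y) as B2.
    replace (vadd (vsub (a y k) y) y) with (a y k) in B2 by vring.
    assert (B3 : c * vnorm (vsub (a y k) y) <= c * (eta / (c + 1))) by nra.
    assert (B4 : c * (eta / (c + 1)) <= eta).
    { unfold Rdiv. replace (c * (eta * / (c + 1))) with (eta * (c / (c + 1))) by (field; lra).
      assert (c / (c + 1) <= 1). { apply Rmult_le_reg_r with (c + 1). lra. unfold Rdiv. rewrite Rmult_assoc, Rinv_l by lra. lra. }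
      nra. }
    pose proof (Rabs_triang_inv (Phi y) (psi (a y k))) as B5. rewrite Rabs_minus_sym in HN1.
    nra. }
  exists Phi. split; [split; [split|]|split].
  - intros y1 y2. apply (UL_sequence (fun k => psi (vadd (a y1 k) (a y2 k)))).
    + apply Key. intros; apply Uadd; apply Ha2. auto.
    + replace (fun k => psi (vadd (a y1 k) (a y2 k))) with (fun k => psi (a y1 k) + psi (a y2 k)).
      apply CV_plus; auto. apply functional_extensionality; intros. rewrite Padd; auto; apply Ha2.
  - intros r y. apply (UL_sequence (fun k => psi (vscal r (a y k)))).
    + apply Key. intros; apply Uscal; apply Ha2.
      apply (cv_squeeze0 _ (fun k => Rabs r * vnorm (vsub (a y k) y))).
      replace 0 with (Rabs r * 0) by ring. apply CV_mult; auto. intros e He; exists O; intros; rewrite R_dist_eq; auto.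
      intros k. rewrite Rabs_right by (apply Rle_ge, vnorm_nonneg).
      replace (vsub (vscal r (a y k)) (vscal r y)) with (vscal r (vsub (a y k) y)) by vring.
      rewrite vnorm_scal. lra.
    + replace (fun k => psi (vscal r (a y k))) with (fun k => r * psi (a y k)).
      apply CV_mult; auto. intros e He; exists O; intros; rewrite R_dist_eq; auto.
      apply functional_extensionality; intros. rewrite Pscal; auto; apply Ha2.
  - exists c. auto.
  - intros x Hx. apply (UL_sequence (fun _ => psi x)). 2: { intros e He; exists O; intros; rewrite R_dist_eq; auto. }
    apply Key. auto. intros e He. exists O. intros. replace (vsub x x) with (@vzero Y) by vring. rewrite vnorm_zero, R_dist_eq. auto.
  - auto.
Qed.

Definition extS {Y : NormedSpace} (S : Y -> Prop) (v : Y) : Y -> Prop :=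
  fun y => exists s t, S s /\ y = vadd s (vscal t v).

Lemma extS_incl (Y : NormedSpace) (S : Y -> Prop) v x : S x -> extS S v x.
Proof. intros H. exists x, 0. split; auto. rewrite vscal_0, vadd_0r. auto. Qed.

Lemma extS_v (Y : NormedSpace) (S : Y -> Prop) v : subsp S -> extS S v v.
Proof. intros [H0 _]. exists vzero, 1. split; auto. rewrite vscal_1, vadd_0l. auto. Qed.

Lemma extS_subsp (Y : NormedSpace) (S : Y -> Prop) v : subsp S -> subsp (extS S v).
Proof.
  intros [H0 [Ha Hs]]. split; [|split].
  - apply extS_incl; auto.
  - intros x y [s1 [t1 [Hs1 ->]]] [s2 [t2 [Hs2 ->]]]. exists (vadd s1 s2), (t1 + t2). split; auto. vring.
  - intros a x [s1 [t1 [Hs1 ->]]]. exists (vscal a s1), (a * t1). split; auto. vring.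
Qed.

Lemma step_ext (Y : NormedSpace) c (S : Y -> Prop) psi v : 0 <= c -> good c S psi ->
  exists psi', good c (extS S v) psi' /\ forall x, S x -> psi' x = psi x.
Proof.
  intros Hc Hg. pose proof Hg as [[S0 [Sa Ss]] [Pa [Ps Pb]]].
  destruct (classic (S v)) as [Hv|Hv].
  - exists psi. split; auto. split. apply extS_subsp; apply Hg.
    assert (Hin : forall y, extS S v y -> S y). { intros y [s [t [Hs ->]]]. apply Sa; auto. }
    split; [|split].
    + intros. apply Pa; auto.
    + intros. apply Ps; auto.
    + intros. apply Pb; auto.
  -
    set (A := fun r => exists s, S s /\ r = psi s - c * vnorm (vsub s v)).
    assert (Hub : forall s s', S s -> S s' -> psi s - c * vnorm (vsub s v) <= c * vnorm (vadd s' v) - psi s').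
    { intros s s' H1 H2. pose proof (Pb (vadd s s') (Sa _ _ H1 H2)). rewrite Pa in H by auto.
      pose proof (vnorm_triangle Y (vsub s v) (vadd s' v)).
      replace (vadd (vsub s v) (vadd s' v)) with (vadd s s') in H0 by vring.
      pose proof (Rle_abs (psi s + psi s')). nra. }
    assert (Hb : bound A). { exists (c * vnorm (vadd vzero v) - psi vzero). intros r [s [Hs ->]]. apply Hub; auto. }
    assert (Hne : exists r, A r). { exists (psi vzero - c * vnorm (vsub vzero v)). exists vzero. auto. }
    destruct (completeness A Hb Hne) as [alpha [Hal1 Hal2]].
    assert (Hal : forall s, S s -> Rabs (psi s + alpha) <= c * vnorm (vadd s v)).
    { intros s Hs. apply Rabs_le. split.
      - assert (psi (vscal (-1) s) - c * vnorm (vsub (vscal (-1) s) v) <= alpha).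
        { apply Hal1. exists (vscal (-1) s). auto. }
        rewrite Ps in H by auto.
        replace (vsub (vscal (-1) s) v) with (vscal (-1) (vadd s v)) in H by vring.
        rewrite vnorm_scal in H. rewrite Rabs_left in H by lra. lra.
      - assert (alpha <= c * vnorm (vadd s v) - psi s).
        { apply Hal2. intros r [s' [Hs' ->]]. apply Hub; auto. }
        lra. }
    assert (Huniq : forall s1 t1 s2 t2, S s1 -> S s2 -> vadd s1 (vscal t1 v) = vadd s2 (vscal t2 v) -> s1 = s2 /\ t1 = t2).
    { intros s1 t1 s2 t2 H1 H2 E. destruct (Req_dec t1 t2) as [Et|Et].
      - subst. split; auto. replace s1 with (vsub (vadd s1 (vscal t2 v)) (vscal t2 v)) by vring.
        rewrite E. vring.
      - exfalso. apply Hv. replace v with (vscal (/ (t1 - t2)) (vsub s2 s1)).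
        apply Ss. apply (good_sub Y c S psi s2 s1 Hg H2 H1).
        assert (E2 : vsub s2 s1 = vscal (t1 - t2) v).
        { replace (vsub s2 s1) with (vsub (vadd s2 (vscal t2 v)) (vadd s1 (vscal t2 v))) by vring.
          rewrite <- E. vring. }
        rewrite E2. rewrite vscal_assoc. replace (/ (t1 - t2) * (t1 - t2)) with 1 by (field; lra). apply vscal_1. }
    set (rep := fun y => epsilon (inhabits (@vzero Y, 0)) (fun p => S (fst p) /\ y = vadd (fst p) (vscal (snd p) v))).
    set (psi' := fun y => psi (fst (rep y)) + snd (rep y) * alpha).
    assert (Hrep : forall s t, S s -> psi' (vadd s (vscal t v)) = psi s + t * alpha).
    { intros s t Hs. unfold psi'.
      assert (H : S (fst (rep (vadd s (vscal t v)))) /\ vadd s (vscal t v) = vadd (fst (rep (vadd s (vscal t v)))) (vscal (snd (rep (vadd s (vscal t v)))) v)).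
      { unfold rep. apply (epsilon_spec (inhabits (@vzero Y, 0)) (fun p => S (fst p) /\ vadd s (vscal t v) = vadd (fst p) (vscal (snd p) v))).
        exists (s, t). auto. }
      destruct H as [H1 H2]. destruct (Huniq _ _ _ _ Hs H1 H2) as [<- <-]. auto. }
    exists psi'. split; [split; [apply extS_subsp; apply Hg|split; [|split]]|].
    + intros x y [s1 [t1 [Hs1 ->]]] [s2 [t2 [Hs2 ->]]].
      replace (vadd (vadd s1 (vscal t1 v)) (vadd s2 (vscal t2 v))) with (vadd (vadd s1 s2) (vscal (t1 + t2) v)) by vring.
      rewrite !Hrep by auto. rewrite Pa by auto. ring.
    + intros a x [s1 [t1 [Hs1 ->]]].
      replace (vscal a (vadd s1 (vscal t1 v))) with (vadd (vscal a s1) (vscal (a * t1) v)) by vring.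
      rewrite !Hrep by auto. rewrite Ps by auto. ring.
    + intros x [s [t [Hs ->]]]. rewrite Hrep by auto.
      destruct (Req_dec t 0) as [Et|Et].
      * subst. rewrite vscal_0, vadd_0r, Rmult_0_l, Rplus_0_r. auto.
      * specialize (Hal (vscal (/ t) s) (Ss _ _ Hs)). rewrite Ps in Hal by auto.
        replace (vadd s (vscal t v)) with (vscal t (vadd (vscal (/ t) s) v)) by vring.
        replace (psi s + t * alpha) with (t * (/ t * psi s + alpha)) by (field; auto).
        rewrite Rabs_mult, vnorm_scal. pose proof (Rabs_pos t). nra.
    + intros x Hx. replace x with (vadd x (vscal 0 v)) by (rewrite vscal_0, vadd_0r; auto). rewrite Hrep by auto.
      rewrite vscal_0, vadd_0r. ring.
Qed.

Fixpoint chain {Y : NormedSpace} (S0 : Y -> Prop) (psi0 : Y -> R)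
  (E : (Y -> Prop) * (Y -> R) -> Y -> (Y -> R)) (d : nat -> Y) (k : nat) : (Y -> Prop) * (Y -> R) :=
  match k with
  | O => (S0, psi0)
  | S k => let p := chain S0 psi0 E d k in (extS (fst p) (d k), E p (d k))
  end.

Lemma HB_ext (Y : NormedSpace) c (S0 : Y -> Prop) psi0 : 0 <= c -> separable Y -> good c S0 psi0 ->
  exists Phi, dual_elem Phi /\ (forall x, S0 x -> Phi x = psi0 x) /\ (forall y, Rabs (Phi y) <= c * vnorm y).
Proof.
  intros Hc [d Hd] Hg0.
  assert (HE1 : forall p : (Y -> Prop) * (Y -> R), exists F : Y -> (Y -> R), forall v,
    good c (fst p) (snd p) -> good c (extS (fst p) v) (F v) /\ forall x, fst p x -> F v x = snd p x).
  { intros p. apply (choice (fun v psi' => good c (fst p) (snd p) -> good c (extS (fst p) v) psi' /\ forall x, fst p x -> psi' x = snd p x)).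
    intros v. destruct (classic (good c (fst p) (snd p))) as [H|H].
    - destruct (step_ext Y c (fst p) (snd p) v Hc H) as [psi' Hp]. exists psi'. auto.
    - exists (snd p). intros; contradiction. }
  apply choice in HE1. destruct HE1 as [E HE].
  set (ch := chain S0 psi0 E d).
  assert (G : forall k, good c (fst (ch k)) (snd (ch k))).
  { induction k. simpl. auto. simpl. apply HE. auto. }
  assert (Inc : forall k m, (k <= m)%nat -> forall x, fst (ch k) x -> fst (ch m) x /\ snd (ch m) x = snd (ch k) x).
  { intros k m Hkm. induction Hkm. auto. intros x Hx. destruct (IHHkm x Hx) as [H1 H2]. simpl.
    split. apply extS_incl; auto. rewrite <- H2. apply HE; auto. }
  set (kk := fun y => epsilon (inhabits O) (fun k => fst (ch k) y)).
  set (psi := fun y => snd (ch (kk y)) y).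
  set (U := fun y => exists k, fst (ch k) y).
  assert (HU : forall k y, fst (ch k) y -> psi y = snd (ch k) y).
  { intros k y Hk. unfold psi.
    assert (Hkk : fst (ch (kk y)) y) by (unfold kk; apply (epsilon_spec (inhabits O) (fun k => fst (ch k) y)); exists k; auto).
    destruct (Inc (kk y) (Nat.max k (kk y)) ltac:(lia) y Hkk) as [_ E1].
    destruct (Inc k (Nat.max k (kk y)) ltac:(lia) y Hk) as [_ E2]. congruence. }
  assert (Hcommon : forall x y, U x -> U y -> exists k, fst (ch k) x /\ fst (ch k) y).
  { intros x y [k1 H1] [k2 H2]. exists (Nat.max k1 k2). split.
    apply (Inc k1); auto; lia. apply (Inc k2); auto; lia. }
  assert (GU : good c U psi).
  { split; [split; [|split]|split; [|split]].
    - exists O. apply (G O).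
    - intros x y Hx Hy. destruct (Hcommon x y Hx Hy) as [k [H1 H2]]. exists k. apply (G k); auto.
    - intros a x [k Hx]. exists k. apply (G k); auto.
    - intros x y Hx Hy. destruct (Hcommon x y Hx Hy) as [k [H1 H2]].
      assert (H3 : fst (ch k) (vadd x y)) by (apply (G k); auto).
      rewrite (HU k _ H3), (HU k _ H1), (HU k _ H2). apply (G k); auto.
    - intros a x [k Hx]. assert (H3 : fst (ch k) (vscal a x)) by (apply (G k); auto).
      rewrite (HU k _ H3), (HU k _ Hx). apply (G k); auto.
    - intros x [k Hx]. rewrite (HU k _ Hx). apply (G k); auto. }
  assert (Hdn : forall n, U (d n)). { intros n. exists (S n). simpl. apply extS_v. apply (G n). }
  destruct (extend_dense Y d U psi c Hc GU Hdn Hd) as [Phi [H1 [H2 H3]]].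
  exists Phi. split; auto. split; auto. intros x Hx.
  rewrite H2 by (exists O; auto). apply (HU O). auto.
Qed.

Lemma sokal1 (X : NormedSpace) (f : X -> R) x r : dual_elem f -> r > 0 ->
  exists y, vnorm (vsub y x) <= r /\ 2 / 3 * r * dnorm f <= Rabs (f y).
Proof.
  intros Hf Hr. pose proof (dnorm_nonneg X f Hf).
  destruct (Req_dec (dnorm f) 0) as [E|E].
  - exists x. replace (vsub x x) with (@vzero X) by vring. rewrite vnorm_zero, E. split. lra.
    rewrite Rmult_0_r. apply Rabs_pos.
  - assert (Hz : exists z, vnorm z <= 1 /\ 2 / 3 * dnorm f < Rabs (f z)).
    { apply NNPP. intros Hn. assert (dnorm f <= 2 / 3 * dnorm f).
      { apply dnorm_le; auto. intros z Hz. apply Rnot_lt_le. intros Hl. apply Hn. exists z. auto. }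
      lra. }
    destruct Hz as [z [Hz1 Hz2]].
    assert (Hlf : linear_functional f) by apply Hf.
    assert (E1 : f (vadd x (vscal r z)) - f (vsub x (vscal r z)) = 2 * r * f z).
    { rewrite lf_add, lf_sub, lf_scal by auto. ring. }
    assert (Hrz : vnorm (vscal r z) <= r). { rewrite vnorm_scal, Rabs_right by lra. nra. }
    destruct (Rle_dec (r * Rabs (f z)) (Rabs (f (vadd x (vscal r z))))) as [H1|H1].
    + exists (vadd x (vscal r z)). split.
      * replace (vsub (vadd x (vscal r z)) x) with (vscal r z) by vring. auto.
      * nra.
    + exists (vsub x (vscal r z)). split.
      * replace (vsub (vsub x (vscal r z)) x) with (vopp (vscal r z)) by vring. rewrite vnorm_opp. auto.
      * assert (Rabs (2 * r * f z) <= Rabs (f (vadd x (vscal r z))) + Rabs (f (vsub x (vscal r z)))).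
        { rewrite <- E1. unfold Rminus. eapply Rle_trans. apply Rabs_triang. rewrite Rabs_Ropp. lra. }
        rewrite !Rabs_mult, (Rabs_right 2), (Rabs_right r) in H0 by lra. nra.
Qed.

Fixpoint iter_seq {X : Type} (F : nat -> X -> X) (x0 : X) (k : nat) : X :=
  match k with O => x0 | S k => F k (iter_seq F x0 k) end.

Lemma pow3_cv : forall e, e > 0 -> exists N, forall n, (N <= n)%nat -> (/ 3) ^ n < e.
Proof.
  intros e He. destruct (pow_lt_1_zero (/ 3) ltac:(rewrite Rabs_right; lra) e He) as [N HN].
  exists N. intros n Hn. specialize (HN n Hn). rewrite Rabs_right in HN. auto.
  apply Rle_ge, pow_le. lra.
Qed.

Lemma UBP (X : NormedSpace) (h : nat -> X -> R) : Banach X -> (forall n, dual_elem (h n)) ->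
  (forall x, exists B, forall n, Rabs (h n x) <= B) -> exists B, forall n, dnorm (h n) <= B.
Proof.
  intros HB Hd Hpt. apply NNPP. intros Hno.
  assert (Hbig : forall k : nat, exists n, 6 * INR (S k) * 3 ^ (S k) < dnorm (h n)).
  { intros k. apply NNPP. intros Hn. apply Hno. exists (6 * INR (S k) * 3 ^ (S k)). intros n.
    apply Rnot_lt_le. intros Hl. apply Hn. exists n. auto. }
  apply choice in Hbig. destruct Hbig as [nk Hnk].
  assert (HF : forall k x, exists y, vnorm (vsub y x) <= (/ 3) ^ (S k) /\
                 2 / 3 * (/ 3) ^ (S k) * dnorm (h (nk k)) <= Rabs (h (nk k) y)).
  { intros k x. apply sokal1. apply Hd. apply pow_lt. lra. }
  assert (HF2 : forall k, exists F : X -> X, forall x, vnorm (vsub (F x) x) <= (/ 3) ^ (S k) /\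
                 2 / 3 * (/ 3) ^ (S k) * dnorm (h (nk k)) <= Rabs (h (nk k) (F x))).
  { intros k. apply (choice (fun x y => vnorm (vsub y x) <= (/ 3) ^ (S k) /\
                 2 / 3 * (/ 3) ^ (S k) * dnorm (h (nk k)) <= Rabs (h (nk k) y))). apply HF. }
  apply choice in HF2. destruct HF2 as [F HFs].
  set (xk := iter_seq F vzero).
  assert (Hgeo : forall k m, (k <= m)%nat -> vnorm (vsub (xk m) (xk k)) <= / 2 * ((/ 3) ^ k - (/ 3) ^ m)).
  { intros k m Hkm. induction Hkm.
    - replace (vsub (xk k) (xk k)) with (@vzero X) by vring. rewrite vnorm_zero. lra.
    - simpl xk. pose proof (proj1 (HFs m (xk m))).
      pose proof (vnorm_sub_tri X (F m (iter_seq F vzero m)) (xk m) (xk k)).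
      simpl in *. unfold xk in *. simpl. replace ((/3) ^ m) with (3 * (/ 3 * (/3) ^ m)) in * by field. lra. }
  assert (Hcau : cauchy xk).
  { intros e He. destruct (pow3_cv e He) as [N HN]. exists N. intros m n Hm Hn.
    pose proof (Hgeo N m Hm). pose proof (Hgeo N n Hn). pose proof (vnorm_sub_tri X (xk m) (xk N) (xk n)).
    rewrite (vnorm_sub_sym X (xk N)) in H1. specialize (HN N (le_n N)).
    pose proof (pow_le (/3) m ltac:(lra)). pose proof (pow_le (/3) n ltac:(lra)). lra. }
  destruct (HB xk Hcau) as [l Hl].
  assert (Hlk : forall k, vnorm (vsub l (xk k)) <= / 2 * (/ 3) ^ k).
  { intros k. assert (vnorm (vsub l (xk k)) - / 2 * (/ 3) ^ k <= 0); [|lra].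
    apply (le_cv_0 _ (fun m => vnorm (vsub (xk (m + k)%nat) l))).
    - intros e He. destruct (Hl e He) as [N HN]. exists N. intros n Hn. unfold R_dist.
      rewrite Rminus_0_r, Rabs_right by (apply Rle_ge, vnorm_nonneg). apply HN. lia.
    - intros m. pose proof (Hgeo k (m + k)%nat ltac:(lia)). pose proof (vnorm_sub_tri X l (xk (m + k)%nat) (xk k)).
      rewrite (vnorm_sub_sym X l (xk (m + k)%nat)) in H0. pose proof (pow_le (/3) (m + k) ltac:(lra)). lra. }
  destruct (Hpt l) as [B HBd].
  destruct (archimed B) as [Hup _].
  set (k := Z.to_nat (up B)).
  assert (Hk : B < INR (S k)).
  { unfold k. rewrite S_INR. destruct (Z_le_gt_dec 0 (up B)).
    - rewrite INR_IZR_INZ, Z2Nat.id by lia. lra.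
    - replace (Z.to_nat (up B)) with O by lia. simpl. assert (IZR (up B) < 0) by (apply IZR_lt; lia). lra. }
  specialize (HBd (nk k)).
  destruct (HFs k (xk k)) as [_ H2].
  assert (Ex : F k (xk k) = xk (S k)) by reflexivity. rewrite Ex in H2.
  pose proof (Hlk (S k)).
  assert (Hl1 : Rabs (h (nk k) (xk (S k))) - Rabs (h (nk k) l) <= dnorm (h (nk k)) * vnorm (vsub l (xk (S k)))).
  { pose proof (dnorm_bound X (h (nk k)) (vsub l (xk (S k))) (Hd _)). rewrite lf_sub in H0 by apply Hd.
    pose proof (Rabs_triang_inv (h (nk k) (xk (S k))) (h (nk k) l)). rewrite Rabs_minus_sym in H0. lra. }
  pose proof (Hnk k). set (D := dnorm (h (nk k))) in *. set (p := (/ 3) ^ (S k)) in *.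
  assert (Hp3 : p * 3 ^ (S k) = 1). { unfold p. rewrite pow_inv. field. apply pow_nonzero. lra. }
  assert (Hp0 : 0 < p) by (apply pow_lt; lra).
  assert (D * vnorm (vsub l (xk (S k))) <= D * (/ 2 * p)).
  { apply Rmult_le_compat_l. pose proof (dnorm_nonneg X _ (Hd (nk k))). auto. auto. }
  assert (/ 6 * p * D > INR (S k)).
  { assert (Hq : p * (6 * INR (S k) * 3 ^ S k) < p * D) by (apply Rmult_lt_compat_l; auto).
    replace (p * (6 * INR (S k) * 3 ^ S k)) with (6 * INR (S k) * (p * 3 ^ S k)) in Hq by ring.
    rewrite Hp3 in Hq. lra. }
  lra.
Qed.

Definition strict (f : nat -> nat) := forall n, (f n < f (S n))%nat.

Lemma strict_mono f : strict f -> forall n m, (n < m)%nat -> (f n < f m)%nat.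
Proof. intros H n m Hnm. induction Hnm. apply H. specialize (H m). lia. Qed.

Lemma strict_ge f : strict f -> forall n, (n <= f n)%nat.
Proof. intros H n. induction n. lia. specialize (H n). lia. Qed.

Lemma strict_comp f g : strict f -> strict g -> strict (fun n => f (g n)).
Proof. intros Hf Hg n. apply strict_mono; auto. Qed.

Lemma cv_sub (s : nat -> R) l f : strict f -> Un_cv s l -> Un_cv (fun n => s (f n)) l.
Proof.
  intros Hf Hs e He. destruct (Hs e He) as [N HN]. exists N. intros n Hn. apply HN.
  pose proof (strict_ge f Hf n). lia.
Qed.

Lemma cv_bounded (s : nat -> R) l : Un_cv s l -> exists B, forall n, Rabs (s n) <= B.
Proof.
  intros H. destruct (H 1 ltac:(lra)) as [N HN].
  exists (rsum (fun i => Rabs (s i)) N + Rabs l + 1). intros n.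
  assert (0 <= rsum (fun i => Rabs (s i)) N) by (apply rsum_nonneg; intros; apply Rabs_pos).
  destruct (le_lt_dec N n).
  - specialize (HN n l0). unfold R_dist in HN. pose proof (Rabs_triang_inv (s n) l). pose proof (Rabs_pos l). lra.
  - pose proof (rsum_term_le (fun i => Rabs (s i)) N n (fun j _ => Rabs_pos (s j)) l0). simpl in H1.
    pose proof (Rabs_pos l). lra.
Qed.

Lemma BW_sub (s : nat -> R) M : (forall n, Rabs (s n) <= M) -> exists f l, strict f /\ Un_cv (fun n => s (f n)) l.
Proof.
  intros HM. destruct (Bolzano_Weierstrass s (fun c => -M <= c <= M) (compact_P3 (-M) M)) as [l Hl].
  { intros n. specialize (HM n). pose proof (Rle_abs (s n)). pose proof (Rle_abs (- s n)). rewrite Rabs_Ropp in H0. lra. }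
  assert (HG : forall n k, exists p, (n < p)%nat /\ Rabs (s p - l) < / INR (S k)).
  { intros n k. set (del := mkposreal _ (inv_S_pos k)).
    destruct (Hl (disc l del) (S n)) as [p [Hp1 Hp2]].
    { exists del. intros x Hx. auto. }
    exists p. split. lia. apply Hp2. }
  assert (HG2 : forall n, exists g : nat -> nat, forall k, (n < g k)%nat /\ Rabs (s (g k) - l) < / INR (S k)).
  { intros n. apply (choice (fun k p => (n < p)%nat /\ Rabs (s p - l) < / INR (S k))). apply HG. }
  apply choice in HG2. destruct HG2 as [G HG3].
  set (f := fix f k := match k with O => G O O | S k => G (f k) (S k) end).
  exists f, l. split.
  - intros n. simpl. apply HG3.
  - apply (cv_dist_tri (fun _ => l)). intros e He; exists O; intros; rewrite R_dist_eq; auto.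
    apply (cv_squeeze0 _ (fun n => / INR (S n))). apply cv_inv_S.
    intros n. destruct n; simpl; left; apply HG3.
Qed.

Lemma abs4 a b c d : Rabs (a + b - c - d) <= Rabs a + Rabs b + Rabs c + Rabs d.
Proof.
  unfold Rminus. pose proof (Rabs_triang (a + b + - c) (- d)). pose proof (Rabs_triang (a + b) (- c)).
  pose proof (Rabs_triang a b). rewrite Rabs_Ropp in *. lra.
Qed.

Lemma R_complete_ex (u : nat -> R) : Cauchy_crit u -> exists l, Un_cv u l.
Proof. intros H. destruct (R_complete u H) as [l Hl]. exists l; auto. Qed.

Fixpoint diag (sel : (nat -> R) -> nat -> nat) (s : nat -> nat -> R) (i : nat) : nat -> nat :=
  match i with
  | O => sel (s O)
  | S i => fun n => diag sel s i (sel (fun m => s (S i) (diag sel s i m)) n)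
  end.

Lemma diag_sub (s : nat -> nat -> R) (Bd : nat -> R) : (forall i n, Rabs (s i n) <= Bd i) ->
  exists sig : nat -> nat, strict sig /\ forall i, exists l, Un_cv (fun k => s i (sig k)) l.
Proof.
  intros HB.
  assert (Hsel : forall t : nat -> R, exists g, strict g /\ ((exists M, forall n, Rabs (t n) <= M) -> exists l, Un_cv (fun n => t (g n)) l)).
  { intros t. destruct (classic (exists M, forall n, Rabs (t n) <= M)) as [[M HM]|Hn].
    - destruct (BW_sub t M HM) as [g [l [H1 H2]]]. exists g. split; auto. intros; exists l; auto.
    - exists (fun n => n). split. intros n; lia. intros; contradiction. }
  apply choice in Hsel. destruct Hsel as [sel Hsel].
  set (ph := diag sel s).
  assert (Hph : forall i, strict (ph i) /\ exists l, Un_cv (fun k => s i (ph i k)) l).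
  { induction i.
    - simpl. destruct (Hsel (s O)) as [H1 H2]. split; auto. apply H2. exists (Bd O). auto.
    - destruct IHi as [Hs _]. destruct (Hsel (fun m => s (S i) (ph i m))) as [H1 H2]. split.
      + intros n. change (ph i (sel (fun m => s (S i) (ph i m)) n) < ph i (sel (fun m => s (S i) (ph i m)) (S n)))%nat.
        apply strict_mono; [exact Hs | exact (H1 n)].
      + apply H2. exists (Bd (S i)). auto. }
  assert (Htail : forall i m, (i <= m)%nat -> forall n, exists t, (n <= t)%nat /\ ph m n = ph i t).
  { intros i m Him. induction Him. intros n. exists n. split; auto.
    intros n. destruct (Hsel (fun k => s (S m) (ph m k))) as [H1 _].
    destruct (IHHim (sel (fun k => s (S m) (ph m k)) n)) as [t [Ht1 Ht2]].
    exists t. split. pose proof (strict_ge _ H1 n). lia. simpl. rewrite <- Ht2. reflexivity. }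
  exists (fun k => ph k k). split.
  - intros k. destruct (Htail k (S k) ltac:(lia) (S k)) as [t [Ht1 Ht2]]. rewrite Ht2.
    apply strict_mono. apply Hph. lia.
  - intros i. destruct (Hph i) as [_ [l Hl]]. exists l. intros e He. destruct (Hl e He) as [N HN].
    exists (Nat.max i N). intros k Hk. destruct (Htail i k ltac:(lia) k) as [t [Ht1 Ht2]].
    rewrite Ht2. apply HN. lia.
Qed.

Lemma wstar_compact (Y : NormedSpace) (Phi : nat -> Y -> R) K : separable Y -> 0 <= K ->
  (forall k, dual_elem (Phi k)) -> (forall k y, Rabs (Phi k y) <= K * vnorm y) ->
  exists sig u, strict sig /\ dual_elem u /\ (forall y, Un_cv (fun k => Phi (sig k) y) (u y)).
Proof.
  intros [d Hd] HK HPd HPb.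
  destruct (diag_sub (fun i n => Phi n (d i)) (fun i => K * vnorm (d i))) as [sig [Hsig Hconv]].
  { intros; apply HPb. }
  assert (Hy : forall y, exists l, Un_cv (fun k => Phi (sig k) y) l).
  { intros y. apply R_complete_ex. intros e He.
    destruct (Hd y (e / (4 * (K + 1)))) as [i Hi]. { apply Rdiv_lt_0_compat; lra. }
    destruct (Hconv i) as [l Hl].
    destruct (Hl (e / 4) ltac:(lra)) as [N HN]. exists N. intros n m Hn Hm. unfold R_dist in *.
    assert (Hlin : forall k, Phi k y - Phi k (d i) = Phi k (vsub y (d i))).
    { intros k. rewrite lf_sub; auto. apply HPd. }
    pose proof (HPb (sig n) (vsub y (d i))). pose proof (HPb (sig m) (vsub y (d i))).
    rewrite <- Hlin in H, H0. specialize (HN n Hn) as H1. specialize (HN m Hm) as H2.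
    assert (K * vnorm (vsub y (d i)) <= e / 4).
    { pose proof (vnorm_nonneg Y (vsub y (d i))).
      assert (K * vnorm (vsub y (d i)) <= (K + 1) * (e / (4 * (K + 1)))) by nra.
      replace ((K + 1) * (e / (4 * (K + 1)))) with (e / 4) in H4 by (field; lra). auto. }
    replace (Phi (sig n) y - Phi (sig m) y) with ((Phi (sig n) y - Phi (sig n) (d i)) + (Phi (sig n) (d i) - l) - (Phi (sig m) (d i) - l) - (Phi (sig m) y - Phi (sig m) (d i))) by ring.
    eapply Rle_lt_trans. apply abs4. lra. }
  apply choice in Hy. destruct Hy as [u Hu].
  exists sig, u. split; auto. split; auto. split; [split|].
  - intros x y. apply (UL_sequence (fun k => Phi (sig k) (vadd x y))); auto.
    replace (fun k => Phi (sig k) (vadd x y)) with (fun k => Phi (sig k) x + Phi (sig k) y).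
    apply CV_plus; auto. apply functional_extensionality; intros. rewrite lf_add; auto. apply HPd.
  - intros a x. apply (UL_sequence (fun k => Phi (sig k) (vscal a x))); auto.
    replace (fun k => Phi (sig k) (vscal a x)) with (fun k => a * Phi (sig k) x).
    apply CV_mult; auto. intros e He; exists O; intros; rewrite R_dist_eq; auto.
    apply functional_extensionality; intros. rewrite lf_scal; auto. apply HPd.
  - exists K. intros y. apply (le_eps _ _ 1). lra. intros eta Heta. destruct (Hu y eta Heta) as [N HN].
    specialize (HN N (le_n N)). specialize (HPb (sig N) y). unfold R_dist in HN.
    pose proof (Rabs_triang_inv (u y) (Phi (sig N) y)). rewrite Rabs_minus_sym in HN. lra.
Qed.

Section SubSec.
Variables (Y : NormedSpace) (P : Y -> Prop) (HP : closed_subspace Y P).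
Notation X := (subspace Y P HP).

Definition iota (x : X) : Y := proj1_sig x.

Lemma iota_norm (x : X) : vnorm x = vnorm (iota x).
Proof. reflexivity. Qed.

Lemma iota_sub (x y : X) : iota (vsub x y) = vsub (iota x) (iota y).
Proof. unfold iota. simpl. unfold vsub. simpl. rewrite vopp_eq. reflexivity. Qed.

Lemma restr_dual (g : Y -> R) : dual_elem g -> dual_elem (fun x : X => g (iota x)).
Proof.
  intros Hg. split. split.
  - intros x y. apply lf_add, Hg.
  - intros a x. apply lf_scal, Hg.
  - exists (dnorm g). intros x. exact (dnorm_bound Y g (iota x) Hg).
Qed.

Lemma restr_dnorm (g : Y -> R) : dual_elem g -> dnorm (fun x : X => g (iota x)) <= dnorm g.
Proof.
  intros Hg. apply dnorm_le_C. apply restr_dual; auto. apply dnorm_nonneg; auto.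
  intros x. exact (dnorm_bound Y g (iota x) Hg).
Qed.

Lemma sub_sep : separable Y -> separable X.
Proof.
  intros [d Hd].
  assert (Hc : forall n k : nat, exists p : X, (exists x : X, vnorm (vsub (iota x) (d n)) < / INR (S k)) ->
     vnorm (vsub (iota p) (d n)) < / INR (S k)).
  { intros n k. destruct (classic (exists x : X, vnorm (vsub (iota x) (d n)) < / INR (S k))) as [[x Hx]|H].
    - exists x. auto.
    - exists (sub_zero Y P HP). intros; contradiction. }
  assert (Hc2 : forall n, exists F : nat -> X, forall k, (exists x : X, vnorm (vsub (iota x) (d n)) < / INR (S k)) ->
     vnorm (vsub (iota (F k)) (d n)) < / INR (S k)).
  { intros n. apply (choice (fun k p => (exists x : X, vnorm (vsub (iota x) (d n)) < / INR (S k)) ->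
     vnorm (vsub (iota p) (d n)) < / INR (S k))). apply Hc. }
  apply choice in Hc2. destruct Hc2 as [F HF].
  exists (fun m => let (n, k) := Cantor.of_nat m in F n k). intros x eps He.
  destruct (small_inv (eps / 2) ltac:(lra)) as [k Hk]. specialize (Hk k (le_n k)).
  destruct (Hd (iota x) (/ INR (S k)) (inv_S_pos k)) as [n Hn].
  exists (Cantor.to_nat (n, k)). rewrite Cantor.cancel_of_to.
  assert (H1 : vnorm (vsub (iota (F n k)) (d n)) < / INR (S k)) by (apply HF; exists x; auto).
  rewrite iota_norm, iota_sub. eapply Rle_lt_trans. apply (vnorm_sub_tri Y _ (d n)).
  rewrite (vnorm_sub_sym Y (d n)). lra.
Qed.

Lemma sub_banach : Banach Y -> Banach X.
Proof.
  intros HB u Hu. destruct (HB (fun n => iota (u n))) as [l Hl].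
  { intros e He. destruct (Hu e He) as [N HN]. exists N. intros m n Hm Hn. rewrite <- iota_sub. apply HN; auto. }
  pose proof HP as [_ [_ [_ Hcl]]].
  assert (Pl : P l) by (apply (Hcl (fun n => iota (u n))); auto; intros; apply (proj2_sig (u n))).
  exists (exist _ l Pl). intros e He. destruct (Hl e He) as [N HN]. exists N. intros n Hn.
  rewrite iota_norm, iota_sub. apply HN; auto.
Qed.

Lemma sub_extend (phi : X -> R) : separable Y -> dual_elem phi ->
  exists Phi, dual_elem Phi /\ (forall x : X, Phi (iota x) = phi x) /\ (forall y, Rabs (Phi y) <= dnorm phi * vnorm y).
Proof.
  intros HsY Hphi.
  set (psi0 := fun y : Y => match excluded_middle_informative (P y) with left H => phi (exist _ y H) | right _ => 0 end).
  assert (Hpsi : forall y (H : P y), psi0 y = phi (exist _ y H)).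
  { intros y H. unfold psi0. destruct (excluded_middle_informative (P y)). f_equal. apply sub_eq. auto. contradiction. }
  pose proof HP as [H0 [Ha [Hs Hcl]]].
  assert (G : good (dnorm phi) P psi0).
  { split; [split; [|split]|split; [|split]]; auto.
    - intros x y Hx Hy. rewrite (Hpsi _ (Ha _ _ Hx Hy)), (Hpsi _ Hx), (Hpsi _ Hy).
      rewrite <- lf_add by apply Hphi. f_equal. apply sub_eq. reflexivity.
    - intros a x Hx. rewrite (Hpsi _ (Hs _ _ Hx)), (Hpsi _ Hx).
      rewrite <- lf_scal by apply Hphi. f_equal. apply sub_eq. reflexivity.
    - intros x Hx. rewrite (Hpsi _ Hx). apply (dnorm_bound X phi (exist _ x Hx) Hphi). }
  destruct (HB_ext Y (dnorm phi) P psi0 (dnorm_nonneg X phi Hphi) HsY G) as [Phi [D1 [D2 D3]]].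
  exists Phi. split; auto. split; auto. intros [x Hx]. unfold iota; simpl. rewrite D2 by auto. apply Hpsi.
Qed.


Lemma sub_key : Banach Y -> has_au_star Y ->
  forall (xs : X -> R) (h : nat -> X -> R), dual_elem xs -> wnull h -> forall eps, eps > 0 ->
  exists M, forall n, (M <= n)%nat -> dnorm (fun x => xs x + h n x) <= dnorm (fun x => xs x - h n x) + eps.
Proof.
  intros HB [HsY Hau] xs h Hxs [Hhd Hhw] eps Heps. apply NNPP. intros Hno.
  assert (Hg : forall M, exists n, (M <= n)%nat /\ dnorm (fun x => xs x - h n x) + eps < dnorm (fun x => xs x + h n x)).
  { intros M. apply NNPP. intros Hn. apply Hno. exists M. intros n Hmn. apply Rnot_lt_le. intros Hl. apply Hn. exists n. auto. }
  apply choice in Hg. destruct Hg as [g Hg].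
  set (sg := fix sg k := match k with O => g O | S k => g (S (sg k)) end).
  assert (Hsg : strict sg). { intros k. simpl. pose proof (proj1 (Hg (S (sg k)))). lia. }
  assert (Hsgp : forall k, dnorm (fun x => xs x - h (sg k) x) + eps < dnorm (fun x => xs x + h (sg k) x)).
  { intros k. destruct k; simpl; apply Hg. }
  destruct (UBP X h (sub_banach HB) Hhd) as [B HBd].
  { intros x. apply (cv_bounded _ 0). apply Hhw. }
  assert (HB0 : 0 <= B) by (pose proof (dnorm_nonneg X _ (Hhd O)); pose proof (HBd O); lra).
  set (K := dnorm xs + B).
  assert (HK : 0 <= K) by (pose proof (dnorm_nonneg X _ Hxs); unfold K; lra).
  assert (Hphi : forall k, dual_elem (fun x => xs x - h (sg k) x)) by (intros; apply dual_sub; auto).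
  assert (Hbk : forall k, dnorm (fun x => xs x - h (sg k) x) <= K).
  { intros k. apply dnorm_le_C; auto. intros x. pose proof (dnorm_bound X xs x Hxs). pose proof (dnorm_bound X _ x (Hhd (sg k))).
    pose proof (HBd (sg k)). pose proof (vnorm_nonneg X x). unfold Rminus. eapply Rle_trans. apply Rabs_triang.
    rewrite Rabs_Ropp. unfold K. nra. }
  assert (Hext : forall k, exists Phi, dual_elem Phi /\ (forall x : X, Phi (iota x) = xs x - h (sg k) x) /\
                   (forall y, Rabs (Phi y) <= dnorm (fun x => xs x - h (sg k) x) * vnorm y)).
  { intros k. apply (sub_extend (fun x => xs x - h (sg k) x)); auto. }
  apply choice in Hext. destruct Hext as [Phi HPhi].
  destruct (wstar_compact Y Phi K HsY HK) as [tau [u [Htau [Hu Hconv]]]].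
  { intros; apply HPhi. }
  { intros k y. eapply Rle_trans. apply HPhi. apply Rmult_le_compat_r. apply vnorm_nonneg. auto. }
  set (w := fun k y => u y - Phi (tau k) y).
  assert (Hwd : forall k, dual_elem (w k)) by (intros; apply dual_sub; auto; apply HPhi).
  assert (Hww : forall y, Un_cv (fun k => w k y) 0).
  { intros y. unfold w. replace 0 with (u y - u y) by ring. apply CV_minus. intros e He; exists O; intros; rewrite R_dist_eq; auto. auto. }
  pose proof (Hau u w Hu Hwd Hww) as Hlim.
  assert (Hux : forall x : X, u (iota x) = xs x).
  { intros x. apply (UL_sequence (fun k => Phi (tau k) (iota x))). auto.
    replace (fun k => Phi (tau k) (iota x)) with (fun k => xs x - h (sg (tau k)) x).
    2: { apply functional_extensionality. intros k. symmetry. apply HPhi. }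
    assert (Hc : Un_cv (fun k => xs x - h (sg (tau k)) x) (xs x - 0)).
    { apply CV_minus. intros e He; exists O; intros; rewrite R_dist_eq; auto.
      apply (cv_sub (fun n => h n x)). apply strict_comp; auto. auto. }
    rewrite Rminus_0_r in Hc. exact Hc. }
  destruct (Hlim eps Heps) as [N HN]. specialize (HN N (le_n N)). unfold R_dist in HN. rewrite Rminus_0_r in HN.
  assert (E1 : dnorm (fun x => u x - w N x) = dnorm (Phi (tau N))).
  { apply dnorm_ext. intros y. unfold w. ring. }
  assert (E2 : dnorm (Phi (tau N)) <= dnorm (fun x => xs x - h (sg (tau N)) x)).
  { apply dnorm_le_C. apply HPhi. apply dnorm_nonneg; auto. apply HPhi. }
  assert (E3 : dnorm (fun x => xs x + h (sg (tau N)) x) <= dnorm (fun x => u x + w N x)).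
  { eapply Rle_trans. 2: apply (restr_dnorm (fun x => u x + w N x)). 2: { apply dual_add; auto. }
    right. apply dnorm_ext. intros x. unfold w. rewrite Hux. rewrite (proj1 (proj2 (HPhi (tau N)))). ring. }
  pose proof (Hsgp (tau N)). apply Rabs_def2 in HN. lra.
Qed.

Lemma sub_au : Banach Y -> has_au_star Y -> has_au_star X.
Proof.
  intros HB Hau. split. apply sub_sep. apply Hau.
  apply au_from_key. intros xs h Hxs Hh. apply sub_key; auto.
Qed.

End SubSec.

Theorem proposition2p4 :
  (forall (X : NormedSpace), Banach X ->
     (exists Q : nat -> X -> X, is_1UFDD X Q /\ shrinking_FDD X Q) ->
     has_au_star X) /\
  (forall (Y : NormedSpace), Banach Y -> separable Y -> has_au_star Y ->
     (forall (P : Y -> Prop) (HP : closed_subspace Y P),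
        has_au_star (subspace Y P HP)) /\
     (forall (Z : Y -> Prop), closed_subspace Y Z ->
        forall (Q : NormedSpace) (q : Y -> Q), Banach Q ->
          is_quotient_map Y Z Q q -> has_au_star Q)).
Proof.
  split.
  - intros X _ [Q [HU HS]]. split.
    + apply (sep_FDD X Q). apply HU.
    + apply au_from_key. intros xs h Hxs Hh. apply (key1 X Q xs h HU HS Hxs Hh).
  - intros Y HB HsY Hau. split.
    + intros P HP. apply sub_au; auto.
    + intros Z _ Q q _ Hq. apply (quot_au Y Z Q q Hq Hau).
Qed.
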